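(* Let $\mathcal{T}^*$ be the category of rooted simplicial trees and rooted metrically proper homotopy classes of rooted continuous metrically proper maps, and let \textbf{Tower-Set} be the category of inverse sequences of sets. Define $\eta:\mathcal{T}^*\to\textbf{Tower-Set}$ as follows. For a rooted simplicial tree $(T,v)$, $\eta(T,v)=(C_n,p_n)_{n\ge 1}$, where $C_n$ is the set of vertices at distance $n$ from $v$ and $p_n:C_{n+1}\to C_n$ sends a vertex $P$ to the unique adjacent vertex of $P$ at distance $n$ from $v$. For a rooted continuous metrically proper map $f:(T,v)\to(T',w)$, choose a strictly increasing sequence of integers $(t_n)$ with $f^{-1}(B(w,n))\subset B(v,t_n)$ for all $n$; for $c\in C_{t_n}$ there is a unique vertex $c'\in C'_n$ (vertices of $T'$ at distance $n$ from $w$) with $f(T_c)\subset T'_{c'}$, and one sets $\Phi_f(n)=t_n$, $f_n(c)=c'$; then $\eta([f])$ is the class of the morphism $(f_n,\Phi_f)$ (this class does not depend on the choices nor on the representative of the homotopy class of $f$). Then $\eta$ is an equivalence of categories.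
   Context: A rooted simplicial tree $(T,v)$ is (the geometric realization of) a simplicial tree, each edge isometric to $[0,1]$, with the path metric, and with a distinguished vertex $v$ (the root). $B(x,r)=\{y: d(x,y)<r\}$. For $c\in T$, $T_c=\{x\in T: c\in[v,x]\}$, where $[v,x]$ is the unique arc from $v$ to $x$. A map $f$ between metric spaces is metrically proper if preimages of bounded sets are bounded; it is rooted if $f(v)=w$. A rooted metrically proper homotopy between rooted continuous metrically proper maps $f,f':(T,v)\to(T',w)$ is a continuous $H:T\times[0,1]\to T'$ with $H(\cdot,0)=f$, $H(\cdot,1)=f'$, $H(v,s)=w$ for all $s$, and such that for every $M>0$ there is $N>0$ with $H^{-1}(B(w,M))\subset B(v,N)\times[0,1]$. An inverse sequence of sets $(X_n,p_n)_{n\ge1}$ consists of sets $X_n$ and maps $p_n:X_{n+1}\to X_n$; write $p_{nm}=p_n\circ\cdots\circ p_{m-1}:X_m\to X_n$ for $n<m$, $p_{nn}=\mathrm{id}$. A morphism $(f_n,\Phi):(X_n,p_n)\to(Y_n,q_n)$ consists of a function $\Phi:\mathbb{N}\to\mathbb{N}$ and maps $f_n:X_{\Phi(n)}\to Y_n$ such that for all $n'>n$ there is $m\ge\Phi(n),\Phi(n')$ with $f_n\circ p_{\Phi(n)m}=q_{nn'}\circ f_{n'}\circ p_{\Phi(n')m}$. Two morphisms $(f_n,\Phi),(g_n,\Psi)$ are equivalent if each $n$ admits $m\ge\Phi(n),\Psi(n)$ with $f_n\circ p_{\Phi(n)m}=g_n\circ p_{\Psi(n)m}$. \textbf{Tower-Set}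 has inverse sequences of sets as objects and equivalence classes of morphisms as morphisms (composition of $(f_n,\Phi)$ followed by $(g_n,\Psi)$ is $(g_n\circ f_{\Psi(n)},\Phi\circ\Psi)$). *)

(* Defs.v *)
From Stdlib Require Import Reals Lra Lia List ClassicalEpsilon.
Import ListNotations.
Open Scope R_scope.

Inductive walk {V : Type} (adj : V -> V -> Prop) (a : V) : V -> nat -> Prop :=
| walk0 : walk adj a a 0
| walkS : forall b c n, walk adj a b n -> adj b c -> walk adj a c (S n).

Definition gdistR {V : Type} (adj : V -> V -> Prop) (a b : V) (n : nat) : Prop :=
  walk adj a b n /\ (forall m, walk adj a b m -> (n <= m)%nat).

Fixpoint chain {V : Type} (adj : V -> V -> Prop) (x : V) (l : list V) : Prop :=
  match l with
  | [] => True
  | y :: l' => adj x y /\ chain adj y l'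
  end.

Definition has_cycle {V : Type} (adj : V -> V -> Prop) : Prop :=
  exists (x0 : V) (l : list V),
    (2 <= length l)%nat /\ NoDup (x0 :: l) /\ chain adj x0 l /\ adj (last l x0) x0.

Record Tree := {
  tV : Type;
  tadj : tV -> tV -> Prop;
  tadj_sym : forall a b, tadj a b -> tadj b a;
  tadj_irr : forall a, ~ tadj a a;
  tconn : forall a b, exists n, walk tadj a b n;
  tacyc : ~ has_cycle tadj
}.

(* graph distance as a function (well specified since trees are connected) *)
Definition gdist (T : Tree) (a b : tV T) : nat :=
  match excluded_middle_informative (exists n, gdistR (tadj T) a b n) with
  | left H => proj1_sig (constructive_indefinite_description _ H)
  | right _ => 0%nat
  end.

(* PV a : the vertex a;  PE a b t : the point at distance t from a on
   the edge [a,b], where b is the child of a (edges oriented away from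
   the root, so that every point has a unique representative). *)
Inductive raw (V : Type) : Type :=
| PV : V -> raw V
| PE : V -> V -> R -> raw V.
Arguments PV {V} _.
Arguments PE {V} _ _ _.

Definition valid (T : Tree) (v : tV T) (x : raw (tV T)) : Prop :=
  match x with
  | PV _ => True
  | PE a b t => tadj T a b /\
                (exists n, gdistR (tadj T) v a n /\ gdistR (tadj T) v b (S n)) /\
                0 < t < 1
  end.

Definition pt (T : Tree) (v : tV T) : Type := {x : raw (tV T) | valid T v x}.

Definition vpt (T : Tree) (v a : tV T) : pt T v := exist _ (PV a) I.

Definition ends {V : Type} (x : raw V) : (V * R) * (V * R) :=
  match x with
  | PV a => ((a, 0), (a, 0))
  | PE a b t => ((a, t), (b, 1 - t))
  end.

Definition leg (T : Tree) (p q : tV T * R) : R :=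
  snd p + INR (gdist T (fst p) (fst q)) + snd q.

Definition via (T : Tree) (x y : raw (tV T)) : R :=
  let (p1, p2) := ends x in
  let (q1, q2) := ends y in
  Rmin (Rmin (leg T p1 q1) (leg T p1 q2)) (Rmin (leg T p2 q1) (leg T p2 q2)).

(* path metric of the geometric realization (edges isometric to [0,1]) *)
Definition rdist (T : Tree) (x y : raw (tV T)) : R :=
  match x, y with
  | PE a b t, PE c d s =>
      if excluded_middle_informative (a = c /\ b = d)
      then Rmin (Rabs (t - s)) (via T x y) else via T x y
  | _, _ => via T x y
  end.

Definition pdist (T : Tree) (v : tV T) (x y : pt T v) : R :=
  rdist T (proj1_sig x) (proj1_sig y).

Definition bounded (T : Tree) (v : tV T) (S : pt T v -> Prop) : Prop :=
  exists (c : pt T v) (r : R), forall y, S y -> pdist T v c y < r.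

Definition RCP (T : Tree) (v : tV T) (T' : Tree) (w : tV T')
  (f : pt T v -> pt T' w) : Prop :=
  (forall x eps, 0 < eps -> exists delta, 0 < delta /\
      forall y, pdist T v x y < delta -> pdist T' w (f x) (f y) < eps) /\
  (forall S, bounded T' w S -> bounded T v (fun x => S (f x))) /\
  proj1_sig (f (vpt T v v)) = PV w.

Definition rmp_homotopic (T : Tree) (v : tV T) (T' : Tree) (w : tV T')
  (f g : pt T v -> pt T' w) : Prop :=
  exists H : pt T v -> R -> pt T' w,
    (forall x, H x 0 = f x) /\
    (forall x, H x 1 = g x) /\
    (forall s, 0 <= s <= 1 -> proj1_sig (H (vpt T v v) s) = PV w) /\
    (forall x s eps, 0 <= s <= 1 -> 0 < eps -> exists delta, 0 < delta /\
       forall y s', 0 <= s' <= 1 -> pdist T v x y < delta -> Rabs (s - s') < delta ->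
         pdist T' w (H x s) (H y s') < eps) /\
    (forall M, 0 < M -> exists N, 0 < N /\
       forall x s, 0 <= s <= 1 -> pdist T' w (vpt T' w w) (H x s) < M ->
         pdist T v (vpt T v v) x < N).

(* c in [v, x]  (c a vertex); for PE a b t the arc [v,x] contains the
   vertices of [v,a] only *)
Definition anc (T : Tree) (v c a : tV T) : Prop :=
  (gdist T v c + gdist T c a)%nat = gdist T v a.

Definition inSub (T : Tree) (v c : tV T) (x : raw (tV T)) : Prop :=
  match x with
  | PV a => anc T v c a
  | PE a _ _ => anc T v c a
  end.

(* Indices are shifted by one: index k here is index k+1 of the paper. *)
Record tower := { tX : nat -> Type; tp : forall n, tX (S n) -> tX n }.

(* bond A n m x y : y = p_{nm}(x)  (only holds when n <= m) *)
Inductive bond (A : tower) (n : nat) : forall m, tX A m -> tX A n -> Prop :=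
| bond_refl : forall x, bond A n n x x
| bond_step : forall m (x : tX A (S m)) y, bond A n m (tp A m x) y -> bond A n (S m) x y.

Record mor (A B : tower) := { mPhi : nat -> nat; mf : forall n, tX A (mPhi n) -> tX B n }.
Arguments mPhi {A B} _ _.
Arguments mf {A B} _ _ _.

Definition IsMor {A B : tower} (f : mor A B) : Prop :=
  forall n n', (n < n')%nat -> exists m, (mPhi f n <= m)%nat /\ (mPhi f n' <= m)%nat /\
    forall (x : tX A m) y1 y2 z,
      bond A (mPhi f n) m x y1 -> bond A (mPhi f n') m x y2 ->
      bond B n n' (mf f n' y2) z -> mf f n y1 = z.

Definition mor_eq {A B : tower} (f g : mor A B) : Prop :=
  forall n, exists m, (mPhi f n <= m)%nat /\ (mPhi g n <= m)%nat /\
    forall (x : tX A m) y1 y2,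
      bond A (mPhi f n) m x y1 -> bond A (mPhi g n) m x y2 -> mf f n y1 = mf g n y2.

Definition mor_id (A : tower) : mor A A :=
  {| mPhi := fun n => n; mf := fun n (x : tX A n) => x |}.

Definition mor_comp {A B C : tower} (f : mor A B) (g : mor B C) : mor A C :=
  {| mPhi := fun n => mPhi f (mPhi g n);
     mf := fun n x => mf g n (mf f (mPhi g n) x) |}.

Definition tower_iso (A B : tower) : Prop :=
  exists (f : mor A B) (g : mor B A), IsMor f /\ IsMor g /\
    mor_eq (mor_comp f g) (mor_id A) /\ mor_eq (mor_comp g f) (mor_id B).

Definition Cset (T : Tree) (v : tV T) (k : nat) : Type :=
  {c : tV T | gdistR (tadj T) v c (S k)}.

Lemma parent_ex (T : Tree) (v : tV T) (k : nat) (c : tV T) :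
  gdistR (tadj T) v c (S (S k)) ->
  exists u, tadj T c u /\ gdistR (tadj T) v u (S k).
Proof.
  intros [Hw Hmin].
  inversion Hw as [|b c' n Hwb Hadj]; subst.
  exists b; split.
  - apply tadj_sym; exact Hadj.
  - split; [exact Hwb|].
    intros m Hm. specialize (Hmin (S m) (walkS _ _ _ _ _ Hm Hadj)). lia.
Qed.

Definition parent (T : Tree) (v : tV T) (k : nat) (c : Cset T v (S k)) : Cset T v k :=
  let H := constructive_indefinite_description _ (parent_ex T v k (proj1_sig c) (proj2_sig c)) in
  exist _ (proj1_sig H) (proj2 (proj2_sig H)).

Definition eta (T : Tree) (v : tV T) : tower :=
  {| tX := Cset T v; tp := parent T v |}.

(* m is a representative of eta([f]) built as in the paper: with
   t_{k+1} = Phi k + 1 strictly increasing, f^{-1}(B(w,k+1)) inside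
   B(v, t_{k+1}), and f(T_c) inside T'_{f_k(c)} for c in C_{t_{k+1}}. *)
Definition IsEtaMor (T : Tree) (v : tV T) (T' : Tree) (w : tV T')
  (f : pt T v -> pt T' w) (m : mor (eta T v) (eta T' w)) : Prop :=
  (forall k, (mPhi m k < mPhi m (S k))%nat) /\
  (forall k x, pdist T' w (vpt T' w w) (f x) < INR (S k) ->
               pdist T v (vpt T v v) x < INR (S (mPhi m k))) /\
  (forall k (c : Cset T v (mPhi m k)) (x : pt T v),
      inSub T v (proj1_sig c) (proj1_sig x) ->
      inSub T' w (proj1_sig (mf m k c)) (proj1_sig (f x))).

(* Main.v *)
Require Import Defs.
From Stdlib Require Import Reals Lra Psatz Lia List ClassicalEpsilon Classical Arith ZArith Eqdep_dec ProofIrrelevance.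

Module MA1.
Import ListNotations.
Open Scope nat_scope.

Lemma least_ex (P : nat -> Prop) : (exists n, P n) -> exists n, P n /\ forall m, P m -> n <= m.
Proof.
  intros [n Hn]. revert Hn. induction n as [n IH] using (well_founded_induction lt_wf).
  intros Pn. destruct (classic (exists m, m < n /\ P m)) as [[m [Hm Pm]]|Hno].
  - exact (IH m Hm Pm).
  - exists n; split; auto. intros m Pm. destruct (le_lt_dec n m); auto.
    exfalso; apply Hno; eauto.
Qed.

Lemma trans_ex (P : nat -> Prop) L : P 0 -> ~ P L -> exists j, j < L /\ P j /\ ~ P (S j).
Proof.
  induction L; intros H0 HL. - contradiction.
  - destruct (classic (P L)) as [HPL|HPL].
    + exists L; auto.
    + destruct (IHL H0 HPL) as [j [? [? ?]]]. exists j; split; [lia|auto].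
Qed.

Fixpoint srch (P : nat -> Prop) (n : nat) : nat :=
  match n with
  | 0 => 0
  | S n' => if excluded_middle_informative (P (S n')) then S n' else srch P n'
  end.

Lemma srch_le P n : srch P n <= n.
Proof. induction n; simpl; auto. destruct excluded_middle_informative; lia. Qed.

Lemma srch_P P n : P 0 -> P (srch P n).
Proof. induction n; simpl; auto. destruct excluded_middle_informative; auto. Qed.

Lemma srch_max P n i : i <= n -> P i -> i <= srch P n.
Proof.
  induction n; simpl; intros Hi Pi. - lia.
  - destruct excluded_middle_informative as [H|H]; [lia|].
    destruct (Nat.eq_dec i (S n)); [subst; contradiction|]. apply IHn; auto; lia.
Qed.

Section TreeA.
Variable T : Tree.
Notation V := (tV T).
Notation adj := (tadj T).

Lemma walk_cons a b c n : adj a b -> walk adj b c n -> walk adj a c (S n).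
Proof.
  intros Hab H; induction H.
  - apply walkS with a; [constructor|exact Hab].
  - eapply walkS; eauto.
Qed.

Lemma walk_app a b c n m : walk adj a b n -> walk adj b c m -> walk adj a c (n + m).
Proof.
  intros H1 H2; induction H2.
  - rewrite Nat.add_0_r; auto.
  - rewrite Nat.add_succ_r. eapply walkS; eauto.
Qed.

Lemma walk_rev a b n : walk adj a b n -> walk adj b a n.
Proof.
  intros H; induction H.
  - constructor.
  - eapply walk_cons; eauto. apply tadj_sym; auto.
Qed.

Lemma walk_0 a b : walk adj a b 0 -> a = b.
Proof. intros H; inversion H; auto. Qed.

Lemma walk_1 a b : adj a b -> walk adj a b 1.
Proof. intros; apply walkS with a; [constructor|auto]. Qed.

Lemma gdistR_ex a b : exists n, gdistR adj a b n.
Proof.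
  destruct (least_ex (fun n => walk adj a b n) (tconn T a b)) as [n [H1 H2]].
  exists n; split; auto.
Qed.

Lemma gdist_spec a b : gdistR adj a b (gdist T a b).
Proof.
  unfold gdist. destruct excluded_middle_informative as [H|H].
  - exact (proj2_sig (constructive_indefinite_description _ H)).
  - exfalso; apply H; apply gdistR_ex.
Qed.

Lemma gdist_eq a b n : gdistR adj a b n -> gdist T a b = n.
Proof.
  intros [H1 H2]. destruct (gdist_spec a b) as [H3 H4].
  specialize (H2 _ H3); specialize (H4 _ H1); lia.
Qed.

Lemma gdist_walk a b : walk adj a b (gdist T a b).
Proof. apply gdist_spec. Qed.

Lemma gdist_le a b n : walk adj a b n -> gdist T a b <= n.
Proof. intros H; apply (proj2 (gdist_spec a b)); auto. Qed.

Lemma gdist_sym a b : gdist T a b = gdist T b a.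
Proof.
  apply Nat.le_antisymm; apply gdist_le; apply walk_rev; apply gdist_walk.
Qed.

Lemma gdist_tri a b c : gdist T a c <= gdist T a b + gdist T b c.
Proof. apply gdist_le; apply walk_app with b; apply gdist_walk. Qed.

Lemma gdist_refl a : gdist T a a = 0.
Proof. pose proof (gdist_le a a 0 (walk0 _ _)); lia. Qed.

Lemma gdist_0 a b : gdist T a b = 0 -> a = b.
Proof. intros H; pose proof (gdist_walk a b) as W; rewrite H in W; apply walk_0; auto. Qed.

Lemma gdist_adj a b : adj a b -> gdist T a b = 1.
Proof.
  intros H. pose proof (gdist_le a b 1 (walk_1 a b H)).
  destruct (gdist T a b) eqn:E; [|lia].
  apply gdist_0 in E; subst; exfalso; eapply tadj_irr; eauto.
Qed.

Variable v : V.
Definition lvl (a : V) : nat := gdist T v a.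

Lemma lvl_walk a b n : walk adj a b n -> lvl b <= lvl a + n.
Proof.
  intros H. unfold lvl. pose proof (gdist_le v b _ (walk_app _ _ _ _ _ (gdist_walk v a) H)); lia.
Qed.

Lemma lvl_gdist a b : lvl b <= lvl a + gdist T a b.
Proof. apply lvl_walk, gdist_walk. Qed.

Lemma lvl_adj a b : adj a b -> lvl b <= S (lvl a).
Proof. intros H; pose proof (lvl_walk _ _ _ (walk_1 a b H)); lia. Qed.

Lemma lvl_v : lvl v = 0.
Proof. apply gdist_refl. Qed.

Lemma lvl0 a : lvl a = 0 -> a = v.
Proof. intros H; symmetry; apply gdist_0; auto. Qed.

Lemma par_ex a : 0 < lvl a -> exists b, adj a b /\ S (lvl b) = lvl a.
Proof.
  intros Hl. pose proof (gdist_walk v a) as W. fold (lvl a) in W.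
  destruct (lvl a) as [|n] eqn:E; [lia|].
  inversion W as [|b c n' Wb Hadj]; subst.
  exists b; split; [apply tadj_sym; auto|].
  pose proof (gdist_le _ _ _ Wb). fold (lvl b) in H. pose proof (lvl_adj _ _ Hadj). lia.
Qed.

Definition par (a : V) : V :=
  match excluded_middle_informative (exists b, adj a b /\ S (lvl b) = lvl a) with
  | left H => proj1_sig (constructive_indefinite_description _ H)
  | right _ => a
  end.

Lemma par_spec a : 0 < lvl a -> adj a (par a) /\ S (lvl (par a)) = lvl a.
Proof.
  intros Hl. unfold par. destruct excluded_middle_informative as [H|H].
  - exact (proj2_sig (constructive_indefinite_description _ H)).
  - exfalso; apply H, par_ex; auto.
Qed.

Lemma par_0 a : lvl a = 0 -> par a = a.
Proof.
  intros Hl. unfold par. destruct excluded_middle_informative as [H|H]; auto.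
  exfalso. destruct H as [b [_ H]]. lia.
Qed.

Lemma lvl_par a : lvl (par a) = lvl a - 1.
Proof.
  destruct (lvl a) eqn:E. - rewrite par_0; auto; lia.
  - pose proof (par_spec a); lia.
Qed.

Definition parn (k : nat) (a : V) : V := Nat.iter k par a.

Lemma lvl_parn k a : lvl (parn k a) = lvl a - k.
Proof.
  induction k; unfold parn in *; simpl. - lia.
  - rewrite lvl_par, IHk; lia.
Qed.

Lemma parn_S k a : parn (S k) a = par (parn k a).
Proof. reflexivity. Qed.

Lemma parn_add p q a : parn (p + q) a = parn p (parn q a).
Proof. unfold parn; apply Nat.iter_add. Qed.

Definition ancL (k : nat) (a : V) : V := parn (lvl a - k) a.

Lemma lvl_ancL k a : k <= lvl a -> lvl (ancL k a) = k.
Proof. intros; unfold ancL; rewrite lvl_parn; lia. Qed.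

Lemma ancL_self a : ancL (lvl a) a = a.
Proof. unfold ancL; rewrite Nat.sub_diag; reflexivity. Qed.

Lemma ancL_ancL k' k a : k' <= k -> k <= lvl a -> ancL k' (ancL k a) = ancL k' a.
Proof.
  intros H1 H2. unfold ancL at 1. rewrite (lvl_ancL k a H2). unfold ancL.
  rewrite <- parn_add. f_equal; lia.
Qed.

Lemma ancL_par k a : S k <= lvl a -> par (ancL (S k) a) = ancL k a.
Proof.
  intros H. unfold ancL. rewrite <- parn_S. f_equal. lia.
Qed.

Lemma ancL_0 a : ancL 0 a = v.
Proof. apply lvl0. apply lvl_ancL; lia. Qed.

Lemma adj_par_ancL k a : S k <= lvl a -> adj (ancL k a) (ancL (S k) a).
Proof.
  intros H. rewrite <- ancL_par by auto. apply tadj_sym. apply par_spec.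
  rewrite lvl_ancL; lia.
Qed.

End TreeA.

End MA1.
Import MA1.

Module MA2.
Import ListNotations.
Open Scope nat_scope.

Lemma last_cons_def {V} (x : V) l a b : last (x :: l) a = last (x :: l) b.
Proof. revert x; induction l as [|y l IH]; intros x; [reflexivity|].
  change (last (y :: l) a = last (y :: l) b). apply IH. Qed.

Lemma chain_app {V} (adj : V -> V -> Prop) a l1 l2 :
  chain adj a l1 -> chain adj (last l1 a) l2 -> chain adj a (l1 ++ l2).
Proof.
  revert a; induction l1 as [|b l1 IH]; intros a H1 H2; simpl in *; auto.
  destruct H1 as [H1 H1']. split; auto. apply IH; auto.
  destruct l1; auto. rewrite (last_cons_def _ _ _ a); auto.
Qed.

Lemma last_app_cons {V} (l1 : list V) a l2 d : last (l1 ++ a :: l2) d = last (a :: l2) d.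
Proof.
  induction l1 as [|b l1 IH]; simpl; auto. rewrite IH. destruct l1; simpl; auto.
Qed.

Lemma last_map_seq {V} (F : nat -> V) n i d : last (map F (seq i (S n))) d = F (i + n).
Proof.
  revert i; induction n; intros i. - simpl. f_equal; lia.
  - change (map F (seq i (S (S n)))) with (F i :: map F (seq (S i) (S n))).
    change (last (F i :: map F (seq (S i) (S n))) d) with (last (map F (seq (S i) (S n))) d).
    rewrite IHn. f_equal; lia.
Qed.

Section TreeA2.
Variable T : Tree.
Notation V := (tV T).
Notation adj := (tadj T).
Variable v : V.
Notation lvl := (lvl T v).
Notation ancL := (ancL T v).
Notation par := (par T v).

Lemma chain_up x i n : i + n <= lvl x -> chain adj (ancL i x) (map (fun k => ancL k x) (seq (S i) n)).
Proof.
  revert i; induction n; intros i H; simpl; auto. split.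
  - apply adj_par_ancL; lia.
  - apply IHn; lia.
Qed.

Lemma chain_down y L i n : L = lvl y -> i + n < L + 1 ->
  chain adj (ancL (L - i) y) (map (fun k => ancL (L - k) y) (seq (S i) n)).
Proof.
  revert i; induction n; intros i HL H; simpl; auto. split.
  - apply tadj_sym. replace (L - i) with (S (L - S i)) by lia. apply adj_par_ancL; lia.
  - apply IHn; lia.
Qed.

Lemma nocycle x y L cn : x <> y -> lvl x = L -> lvl y = L -> NoDup cn ->
  (forall z, In z cn -> L < lvl z) -> chain adj x (cn ++ [y]) -> False.
Proof.
  intros Hxy Hx Hy Hnd Hcn Hch.
  set (Q := fun i => ancL i x = ancL i y).
  assert (Q0 : Q 0) by (unfold Q; rewrite !ancL_0; auto).
  assert (QL : ~ Q L).
  { unfold Q; intro E. rewrite <- Hx in E at 1. rewrite <- Hy in E. rewrite !ancL_self in E. auto. }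
  destruct (trans_ex Q L Q0 QL) as [j [Hj [Qj Qj1]]].
  assert (HQ : forall i, S j <= i <= L -> ancL i x <> ancL i y).
  { intros i Hi E. apply Qj1. unfold Q.
    rewrite <- (ancL_ancL _ _ (S j) i x) by lia. rewrite E. apply ancL_ancL; lia. }
  set (d := L - j).
  set (A := fun k => ancL k x). set (B := fun k => ancL (L - k) y).
  set (la := map A (seq (S j) d)).
  set (lb := map B (seq 0 d)).
  assert (Hlb : lb = y :: map B (seq 1 (d - 1))).
  { unfold lb. replace d with (S (d - 1)) at 1 by lia. simpl. f_equal.
    unfold B. rewrite Nat.sub_0_r. rewrite <- Hy. apply ancL_self. }
  apply (tacyc T). exists (A j), (la ++ cn ++ lb). split; [|split; [|split]].
  - unfold la, lb. rewrite !length_app, !length_map, !length_seq. lia.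
  - constructor.
    + intro Hin. apply in_app_or in Hin as [Hin|Hin]; [|apply in_app_or in Hin as [Hin|Hin]].
      * unfold la in Hin. apply in_map_iff in Hin as [k [E Hk]]. apply in_seq in Hk.
        unfold A in E. apply (f_equal lvl) in E. rewrite !lvl_ancL in E by lia. lia.
      * apply Hcn in Hin. unfold A in Hin. rewrite lvl_ancL in Hin; lia.
      * unfold lb in Hin. apply in_map_iff in Hin as [k [E Hk]]. apply in_seq in Hk.
        unfold A, B in E. apply (f_equal lvl) in E. rewrite !lvl_ancL in E by lia. lia.
    + apply NoDup_app; [|apply NoDup_app|].
      * apply NoDup_map_NoDup_ForallPairs; [|apply seq_NoDup].
        intros a b Ha Hb E. apply in_seq in Ha, Hb. unfold A in E.
        apply (f_equal lvl) in E. rewrite !lvl_ancL in E by lia. auto.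
      * auto.
      * apply NoDup_map_NoDup_ForallPairs; [|apply seq_NoDup].
        intros a b Ha Hb E. apply in_seq in Ha, Hb. unfold B in E.
        apply (f_equal lvl) in E. rewrite !lvl_ancL in E by lia. lia.
      * intros a Ha Hb. apply Hcn in Ha. unfold lb in Hb. apply in_map_iff in Hb as [k [E Hk]].
        apply in_seq in Hk. subst a. unfold B in Ha. rewrite lvl_ancL in Ha; lia.
      * intros a Ha Hb. unfold la in Ha. apply in_map_iff in Ha as [k [E Hk]].
        apply in_seq in Hk. subst a. unfold A in Hb.
        apply in_app_or in Hb as [Hb|Hb].
        -- apply Hcn in Hb. rewrite lvl_ancL in Hb; lia.
        -- unfold lb in Hb. apply in_map_iff in Hb as [k' [E Hk']]. apply in_seq in Hk'.
           unfold B in E. assert (k = L - k').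
           { apply (f_equal lvl) in E. rewrite !lvl_ancL in E by lia. lia. }
           subst k. apply (HQ (L - k')); [lia|auto].
  - apply chain_app.
    + unfold la, A. apply chain_up; lia.
    + unfold la. replace d with (S (d - 1)) by lia. rewrite last_map_seq.
      unfold A. replace (S j + (d - 1)) with L by lia. rewrite <- Hx, ancL_self.
      rewrite Hlb. replace (cn ++ y :: map B (seq 1 (d - 1))) with ((cn ++ [y]) ++ map B (seq 1 (d - 1)))
        by (rewrite <- app_assoc; reflexivity).
      apply chain_app; auto. rewrite last_last.
      replace y with (B 0) at 1 by (unfold B; rewrite Nat.sub_0_r, <- Hy; apply ancL_self).
      unfold B. apply chain_down; lia.
  - assert (E : last (la ++ cn ++ lb) (A j) = B (d - 1)).
    { assert (Elb : lb = map B (seq 0 (S (d - 1)))) by (unfold lb; do 2 f_equal; lia).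
      rewrite Elb. destruct (map B (seq 0 (S (d - 1)))) eqn:E0; [simpl in E0; discriminate|].
      rewrite app_assoc, last_app_cons, <- E0, last_map_seq. reflexivity. }
    rewrite E. unfold B, A. replace (L - (d - 1)) with (S j) by lia. rewrite Qj.
    apply tadj_sym. apply adj_par_ancL; lia.
Qed.

Lemma adj_lvl_neq a b : adj a b -> lvl a <> lvl b.
Proof.
  intros H E. apply (nocycle a b (lvl a) []); [|reflexivity|lia| | |].
  - intro; subst; eapply tadj_irr; eauto.
  - constructor.
  - intros z [].
  - simpl; auto.
Qed.

Lemma par_unique a b : adj b a -> S (lvl b) = lvl a -> b = par a.
Proof.
  intros H E. destruct (classic (b = par a)) as [|Hn]; auto. exfalso.
  destruct (par_spec T v a) as [H1 H2]; [lia|].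
  apply (nocycle b (par a) (lvl b) [a]); [auto|reflexivity|lia| | |].
  - constructor; [intros []|constructor].
  - intros z [<-|[]]; lia.
  - simpl; auto.
Qed.

Lemma adj_cases a b : adj a b ->
  (S (lvl a) = lvl b /\ a = par b) \/ (S (lvl b) = lvl a /\ b = par a).
Proof.
  intros H. pose proof (lvl_adj T v _ _ H). pose proof (lvl_adj T v _ _ (tadj_sym T _ _ H)).
  pose proof (adj_lvl_neq _ _ H).
  destruct (Nat.lt_ge_cases (lvl a) (lvl b)).
  - left. assert (S (lvl a) = lvl b) by lia. split; auto. apply par_unique; auto.
  - right. assert (S (lvl b) = lvl a) by lia. split; auto. apply par_unique; [apply tadj_sym|]; auto.
Qed.

End TreeA2.

End MA2.
Import MA2.

Module MA3.
Import ListNotations.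
Open Scope nat_scope.

Section TreeA3.
Variable T : Tree.
Notation V := (tV T).
Notation adj := (tadj T).
Variable v : V.
Notation lvl := (lvl T v).
Notation ancL := (ancL T v).
Notation par := (par T v).
Notation parn := (parn T v).

Lemma walk_up c a n : walk adj c a n -> lvl a = lvl c + n -> c = parn n a.
Proof.
  intros W; induction W as [|b a n W IH Hadj]; intros E.
  - reflexivity.
  - pose proof (lvl_walk T v _ _ _ W). pose proof (lvl_adj T v _ _ Hadj).
    assert (Eb : lvl b = lvl c + n) by lia.
    rewrite (IH Eb). rewrite (par_unique T v a b Hadj ltac:(lia)).
    unfold parn. rewrite <- Nat.iter_succ_r. reflexivity.
Qed.

Lemma parn_walk k a : k <= lvl a -> walk adj (parn k a) a k.
Proof.
  induction k; intros H. - constructor.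
  - rewrite parn_S. apply walk_cons with (parn k a); [|apply IHk; lia].
    apply tadj_sym. apply par_spec. rewrite lvl_parn; lia.
Qed.

Lemma gdist_parn k a : k <= lvl a -> gdist T (parn k a) a = k.
Proof.
  intros H. apply Nat.le_antisymm. - apply gdist_le, parn_walk; auto.
  - pose proof (lvl_gdist T v (parn k a) a). rewrite lvl_parn in H0. lia.
Qed.

Lemma gdist_ancL k a : k <= lvl a -> gdist T (ancL k a) a = lvl a - k.
Proof. intros; unfold ancL; apply gdist_parn; lia. Qed.

Lemma anc_iff c a : anc T v c a <-> lvl c <= lvl a /\ c = ancL (lvl c) a.
Proof.
  unfold anc. change (gdist T v c) with (lvl c). change (gdist T v a) with (lvl a). split.
  - intros E. split; [lia|]. unfold ancL. apply walk_up.
    + replace (lvl a - lvl c) with (gdist T c a) by lia. apply gdist_walk.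
    + lia.
  - intros [H1 H2]. rewrite H2 at 2. rewrite gdist_ancL; lia.
Qed.

Lemma anc_ancL k a : k <= lvl a -> anc T v (ancL k a) a.
Proof. intros H. apply anc_iff. rewrite lvl_ancL; auto. Qed.

Lemma anc_refl a : anc T v a a.
Proof. apply anc_iff. rewrite ancL_self; auto. Qed.

Lemma anc_lvl c a : anc T v c a -> lvl c <= lvl a.
Proof. intros H; apply anc_iff in H; tauto. Qed.

Lemma anc_eq c a : anc T v c a -> c = ancL (lvl c) a.
Proof. intros H; apply anc_iff in H; tauto. Qed.

Lemma anc_trans a b c : anc T v a b -> anc T v b c -> anc T v a c.
Proof.
  intros H1 H2. apply anc_iff in H1 as [H1 E1]. apply anc_iff in H2 as [H2 E2].
  apply anc_iff. split; [lia|]. rewrite E1 at 1. rewrite E2. apply ancL_ancL; lia.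
Qed.

Lemma anc_unique c1 c2 a : anc T v c1 a -> anc T v c2 a -> lvl c1 = lvl c2 -> c1 = c2.
Proof. intros H1 H2 E. rewrite (anc_eq _ _ H1), (anc_eq _ _ H2), E. auto. Qed.

Lemma par_ancL c : 0 < lvl c -> par c = ancL (lvl c - 1) c.
Proof. intros H. unfold ancL. replace (lvl c - (lvl c - 1)) with 1 by lia. reflexivity. Qed.

Lemma anc_par c : anc T v (par c) c.
Proof.
  destruct (lvl c) eqn:E. - rewrite par_0 by auto. apply anc_refl.
  - rewrite par_ancL by lia. apply anc_ancL; lia.
Qed.

Definition meet (a b : V) : nat :=
  srch (fun i => ancL i a = ancL i b) (Nat.min (lvl a) (lvl b)).

Lemma meet_spec a b : ancL (meet a b) a = ancL (meet a b) b.
Proof. unfold meet. apply (srch_P (fun i => ancL i a = ancL i b)). rewrite !ancL_0; auto. Qed.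

Lemma meet_le a b : meet a b <= lvl a /\ meet a b <= lvl b.
Proof. pose proof (srch_le (fun i => ancL i a = ancL i b) (Nat.min (lvl a) (lvl b))). fold (meet a b) in H. lia. Qed.

Lemma meet_max a b i : i <= lvl a -> i <= lvl b -> ancL i a = ancL i b -> i <= meet a b.
Proof. intros; apply srch_max; auto; lia. Qed.

Lemma meet_iff a b i : i <= lvl a -> i <= lvl b -> (ancL i a = ancL i b <-> i <= meet a b).
Proof.
  intros H1 H2; split; [apply meet_max; auto|]. intros H.
  pose proof (meet_spec a b). pose proof (meet_le a b).
  rewrite <- (ancL_ancL _ _ i (meet a b) a), <- (ancL_ancL _ _ i (meet a b) b) by lia.
  congruence.
Qed.

Lemma meet_sym a b : meet a b = meet b a.
Proof.
  pose proof (meet_le a b). pose proof (meet_le b a).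
  apply Nat.le_antisymm; apply meet_max; try lia; symmetry; apply meet_spec.
Qed.

Lemma meet_refl a : meet a a = lvl a.
Proof. pose proof (meet_le a a). apply Nat.le_antisymm; [lia|apply meet_max; auto]. Qed.

Lemma meet_ult a b c : Nat.min (meet a c) (meet c b) <= meet a b.
Proof.
  pose proof (meet_le a c). pose proof (meet_le c b).
  apply meet_max; try lia.
  transitivity (ancL (Nat.min (meet a c) (meet c b)) c).
  - apply meet_iff; lia.
  - apply meet_iff; lia.
Qed.

Lemma meet_ancL k a b : k <= lvl a -> meet (ancL k a) b = Nat.min k (meet a b).
Proof.
  intros Hk. pose proof (meet_le a b). pose proof (meet_le (ancL k a) b).
  rewrite lvl_ancL in H0 by auto.
  apply Nat.le_antisymm.
  - apply Nat.min_glb; [lia|]. apply meet_max; try lia.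
    rewrite <- (ancL_ancL _ _ (meet (ancL k a) b) k a) by lia. apply meet_spec.
  - apply meet_max; try (rewrite lvl_ancL; lia); try lia.
    rewrite ancL_ancL by lia. apply meet_iff; lia.
Qed.

Lemma meet_par a b : 0 < lvl a -> meet (par a) b = Nat.min (lvl a - 1) (meet a b).
Proof. intros H. rewrite par_ancL by auto. apply meet_ancL; lia. Qed.

Lemma meet_v b : meet v b = 0.
Proof. pose proof (meet_le v b). rewrite lvl_v in H. lia. Qed.

Lemma meet_full a b : meet a b = lvl a -> anc T v a b.
Proof.
  intros E. pose proof (meet_le a b). apply anc_iff. split; [lia|].
  pose proof (meet_spec a b). rewrite E, ancL_self in H0. auto.
Qed.

Lemma anc_meet a b : anc T v a b -> meet a b = lvl a.
Proof.
  intros H. pose proof (meet_le a b). apply anc_iff in H as [H1 H2].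
  apply Nat.le_antisymm; [lia|]. apply meet_max; auto. rewrite ancL_self; auto.
Qed.

Lemma gdist_meet a b : gdist T a b + 2 * meet a b = lvl a + lvl b.
Proof.
  apply Nat.le_antisymm.
  - pose proof (meet_le a b).
    assert (W : walk adj a b ((lvl a - meet a b) + (lvl b - meet a b))).
    { apply walk_app with (ancL (meet a b) a).
      - apply walk_rev. unfold ancL. apply parn_walk. lia.
      - rewrite meet_spec. unfold ancL. apply parn_walk. lia. }
    apply gdist_le in W. lia.
  - assert (G : forall c n, walk adj a c n -> lvl a + lvl c <= n + 2 * meet a c).
    { intros c n W. induction W as [|b' c n W IH Hadj].
      - rewrite meet_refl; lia.
      - destruct (adj_cases T v b' c Hadj) as [[E1 E2]|[E1 E2]].
        + rewrite E2 in IH. rewrite (meet_sym a (par c)), meet_par in IH by lia.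
          rewrite (meet_sym c a) in IH. rewrite <- E2 in IH. lia.
        + rewrite E2 in E1 |- *. rewrite (meet_sym a (par b')), meet_par by lia.
          rewrite (meet_sym b' a). pose proof (meet_le a b'). lia. }
    apply G, gdist_walk.
Qed.

End TreeA3.

End MA3.
Import MA3.

Module MB0.
Open Scope R_scope.

Ltac rmin_solve := unfold Rmin, Rmax, Rabs in *; repeat (destruct Rle_dec || destruct Rcase_abs); lra.

Lemma arith_EE (la lc X : nat) (t s : R) :
  (X <= S la)%nat -> (X <= S lc)%nat -> ~ (X = S la /\ X = S lc) -> 0 < t < 1 -> 0 < s < 1 ->
  Rmin (Rmin (t + (INR la + INR lc - 2 * INR (Nat.min la (Nat.min lc X))) + s)
             (t + (INR la + INR (S lc) - 2 * INR (Nat.min la X)) + (1 - s)))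
       (Rmin (1 - t + (INR (S la) + INR lc - 2 * INR (Nat.min lc X)) + s)
             (1 - t + (INR (S la) + INR (S lc) - 2 * INR X) + (1 - s)))
  = (INR la + t) + (INR lc + s) - 2 * Rmin (INR X) (Rmin (INR la + t) (INR lc + s)).
Proof.
  intros H1 H2 H3 Ht Hs. rewrite !S_INR.
  destruct (le_lt_dec X la) as [Ha|Ha]; destruct (le_lt_dec X lc) as [Hc|Hc].
  - rewrite (Nat.min_r lc X Hc), (Nat.min_r la X Ha).
    apply le_INR in Ha; apply le_INR in Hc. rmin_solve.
  - assert (X = S lc) by lia. subst X. assert (S lc <= la)%nat by lia.
    rewrite (Nat.min_l lc (S lc)) by lia. rewrite (Nat.min_r la lc) by lia. rewrite (Nat.min_r la (S lc)) by lia.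
    apply le_INR in H. rewrite S_INR in *. rmin_solve.
  - assert (X = S la) by lia. subst X. assert (S la <= lc)%nat by lia.
    rewrite (Nat.min_r lc (S la)) by lia. rewrite (Nat.min_l la (S la)) by lia.
    apply le_INR in H. rewrite S_INR in *. rmin_solve.
  - lia.
Qed.

Lemma arith_VE (la lc X : nat) (s : R) :
  (X <= la)%nat -> (X <= S lc)%nat -> 0 < s < 1 ->
  Rmin (Rmin (0 + (INR la + INR lc - 2 * INR (Nat.min lc X)) + s)
             (0 + (INR la + INR (S lc) - 2 * INR X) + (1 - s)))
       (Rmin (0 + (INR la + INR lc - 2 * INR (Nat.min lc X)) + s)
             (0 + (INR la + INR (S lc) - 2 * INR X) + (1 - s)))
  = INR la + (INR lc + s) - 2 * Rmin (INR X) (Rmin (INR la) (INR lc + s)).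
Proof.
  intros H1 H2 Hs. rewrite !S_INR.
  destruct (le_lt_dec X lc) as [Hc|Hc].
  - rewrite (Nat.min_r lc X Hc). apply le_INR in Hc; apply le_INR in H1. rmin_solve.
  - assert (X = S lc) by lia. subst X. rewrite (Nat.min_l lc (S lc)) by lia.
    apply le_INR in H1. rewrite S_INR in *. rmin_solve.
Qed.

Lemma arith_EV (la lc X : nat) (t : R) :
  (X <= S la)%nat -> (X <= lc)%nat -> 0 < t < 1 ->
  Rmin (Rmin (t + (INR la + INR lc - 2 * INR (Nat.min la X)) + 0)
             (t + (INR la + INR lc - 2 * INR (Nat.min la X)) + 0))
       (Rmin (1 - t + (INR (S la) + INR lc - 2 * INR X) + 0)
             (1 - t + (INR (S la) + INR lc - 2 * INR X) + 0))
  = (INR la + t) + INR lc - 2 * Rmin (INR X) (Rmin (INR la + t) (INR lc)).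
Proof.
  intros H1 H2 Ht. rewrite !S_INR.
  destruct (le_lt_dec X la) as [Ha|Ha].
  - rewrite (Nat.min_r la X Ha). apply le_INR in Ha; apply le_INR in H2. rmin_solve.
  - assert (X = S la) by lia. subst X. rewrite (Nat.min_l la (S la)) by lia.
    apply le_INR in H2. rewrite S_INR in *. rmin_solve.
Qed.

Lemma arith_VV (la lc X : nat) :
  (X <= la)%nat -> (X <= lc)%nat ->
  Rmin (Rmin (0 + (INR la + INR lc - 2 * INR X) + 0) (0 + (INR la + INR lc - 2 * INR X) + 0))
       (Rmin (0 + (INR la + INR lc - 2 * INR X) + 0) (0 + (INR la + INR lc - 2 * INR X) + 0))
  = INR la + INR lc - 2 * Rmin (INR X) (Rmin (INR la) (INR lc)).
Proof.
  intros H1 H2. apply le_INR in H1; apply le_INR in H2. rmin_solve.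
Qed.

Lemma arith_same (la : nat) (t s : R) : 0 < t < 1 -> 0 < s < 1 ->
  Rmin (Rabs (t - s))
    (Rmin (Rmin (t + 0 + s) (t + 1 + (1 - s))) (Rmin (1 - t + 1 + s) (1 - t + 0 + (1 - s))))
  = (INR la + t) + (INR la + s) - 2 * Rmin (INR la + 1) (Rmin (INR la + t) (INR la + s)).
Proof. intros. rmin_solve. Qed.

End MB0.
Import MB0.

Module MB1.
Import ListNotations.
Open Scope R_scope.

Lemma INR_frac_neq (a b : nat) (s : R) : 0 < s < 1 -> INR a <> INR b + s.
Proof.
  intros Hs E. destruct (le_lt_dec a b) as [H|H].
  - apply le_INR in H. lra.
  - apply le_INR in H. rewrite S_INR in H. lra.
Qed.

Lemma INR_frac_eq (a b : nat) (t s : R) : 0 <= t < 1 -> 0 <= s < 1 -> INR a + t = INR b + s -> a = b /\ t = s.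
Proof.
  intros Ht Hs E. destruct (lt_eq_lt_dec a b) as [[H|H]|H].
  - pose proof (le_INR (S a) b H). rewrite S_INR in H0. lra.
  - subst; split; auto; lra.
  - pose proof (le_INR (S b) a H). rewrite S_INR in H0. lra.
Qed.

Section PtB.
Variable T : Tree.
Notation V := (tV T).
Notation adj := (tadj T).
Variable v : V.
Notation lvl := (lvl T v).
Notation ancL := (ancL T v).
Notation par := (par T v).
Notation meet := (meet T v).

Definition tvx (x : raw V) : V := match x with PV a => a | PE _ b _ => b end.
Definition hx (x : raw V) : R := match x with PV a => INR (lvl a) | PE a _ t => INR (lvl a) + t end.
Definition mx (x y : raw V) : R := Rmin (INR (meet (tvx x) (tvx y))) (Rmin (hx x) (hx y)).
Definition DD (x y : raw V) : R := hx x + hx y - 2 * mx x y.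

Lemma valid_PE a b t : valid T v (PE a b t) -> adj a b /\ lvl b = S (lvl a) /\ a = par b /\ 0 < t < 1.
Proof.
  intros [H1 [[n [Ha Hb]] Ht]]. apply gdist_eq in Ha. apply gdist_eq in Hb.
  change (gdist T v a) with (lvl a) in Ha. change (gdist T v b) with (lvl b) in Hb.
  assert (E : lvl b = S (lvl a)) by lia. repeat split; auto; try lra.
  apply par_unique; auto.
Qed.

Lemma gdistR_formula p q : INR (gdist T p q) = INR (lvl p) + INR (lvl q) - 2 * INR (meet p q).
Proof.
  pose proof (gdist_meet T v p q). apply (f_equal INR) in H. rewrite plus_INR, mult_INR, plus_INR in H.
  simpl in H. lra.
Qed.

Lemma meet_par_r a b : (0 < lvl b)%nat -> meet a (par b) = Nat.min (lvl b - 1)%nat (meet a b).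
Proof. intros H. rewrite meet_sym, meet_par by auto. rewrite meet_sym; auto. Qed.

Lemma rdist_formula x y : valid T v x -> valid T v y -> rdist T x y = DD x y.
Proof.
  intros Vx Vy. destruct x as [a|a b t]; destruct y as [c|c d s].
  - unfold rdist, via, leg; simpl. rewrite gdistR_formula. unfold DD, mx, hx; simpl.
    pose proof (meet_le T v a c). apply arith_VV; lia.
  - apply valid_PE in Vy as [Hcd [Ed [Ec Hs]]].
    unfold rdist, via, leg; simpl. rewrite (gdistR_formula a c), (gdistR_formula a d). unfold DD, mx, hx; simpl.
    assert (E : meet a c = Nat.min (lvl c) (meet a d)).
    { rewrite Ec at 1. rewrite meet_par_r by lia. rewrite Ed; f_equal; lia. }
    rewrite E, Ed. pose proof (meet_le T v a d). apply arith_VE; try lia; auto.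
  - apply valid_PE in Vx as [Hab [Eb [Ea Ht]]].
    unfold rdist, via, leg; simpl. rewrite (gdistR_formula a c), (gdistR_formula b c). unfold DD, mx, hx; simpl.
    assert (E : meet a c = Nat.min (lvl a) (meet b c)).
    { rewrite Ea at 1. rewrite meet_par by lia. rewrite Eb; f_equal; lia. }
    rewrite E, Eb. pose proof (meet_le T v b c). apply arith_EV; try lia; auto.
  - apply valid_PE in Vx as [Hab [Eb [Ea Ht]]].
    apply valid_PE in Vy as [Hcd [Ed [Ec Hs]]].
    unfold rdist. destruct excluded_middle_informative as [[<- <-]|Hne].
    + unfold via, leg; simpl. rewrite (gdist_sym T b a), !gdist_refl, !gdist_adj by auto.
      unfold DD, mx, hx; simpl. rewrite meet_refl, Eb, S_INR. apply arith_same; auto.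
    + unfold via, leg; simpl. rewrite (gdistR_formula a c), (gdistR_formula a d), (gdistR_formula b c), (gdistR_formula b d). unfold DD, mx, hx; simpl.
      set (X := meet b d).
      assert (E1 : meet a c = Nat.min (lvl a) (Nat.min (lvl c) X)).
      { rewrite Ea at 1. rewrite meet_par by lia. rewrite Ec at 1. rewrite meet_par_r by lia. rewrite Eb, Ed.
        f_equal; [lia|f_equal; lia]. }
      assert (E2 : meet a d = Nat.min (lvl a) X).
      { rewrite Ea at 1. rewrite meet_par by lia. rewrite Eb; f_equal; lia. }
      assert (E3 : meet b c = Nat.min (lvl c) X).
      { rewrite Ec at 1. rewrite meet_par_r by lia. rewrite Ed; f_equal; lia. }
      rewrite E1, E2, E3, Eb, Ed. pose proof (meet_le T v b d). fold X in H.
      apply arith_EE; auto; try lia.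
      intros [H1 H2]. apply Hne.
      assert (b = d).
      { apply (anc_unique T v b d d); [|apply anc_refl|lia].
        apply meet_full. fold X; lia. }
      subst d. split; congruence.
Qed.


Lemma hx_nonneg x : valid T v x -> 0 <= hx x.
Proof.
  intros Vx; destruct x as [a|a b t]; simpl. - apply pos_INR.
  - apply valid_PE in Vx as [_ [_ [_ Ht]]]. pose proof (pos_INR (lvl a)). lra.
Qed.

Lemma hx_tv x : valid T v x -> hx x <= INR (lvl (tvx x)) < hx x + 1.
Proof.
  intros Vx; destruct x as [a|a b t]; simpl. - lra.
  - apply valid_PE in Vx as [_ [Eb [_ Ht]]]. rewrite Eb, S_INR. lra.
Qed.

Lemma mx_le_l x y : mx x y <= hx x.
Proof. unfold mx. rmin_solve. Qed.
Lemma mx_le_r x y : mx x y <= hx y.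
Proof. unfold mx. rmin_solve. Qed.
Lemma mx_sym x y : mx x y = mx y x.
Proof. unfold mx. rewrite meet_sym. rmin_solve. Qed.
Lemma mx_nonneg x y : valid T v x -> valid T v y -> 0 <= mx x y.
Proof. intros. pose proof (hx_nonneg x H). pose proof (hx_nonneg y H0).
  pose proof (pos_INR (meet (tvx x) (tvx y))). unfold mx. rmin_solve. Qed.
Lemma mx_self x : valid T v x -> mx x x = hx x.
Proof. intros Vx. pose proof (hx_tv x Vx). unfold mx. rewrite meet_refl. rmin_solve. Qed.
Lemma mx_ult x y z : Rmin (mx x z) (mx z y) <= mx x y.
Proof.
  unfold mx. pose proof (meet_ult T v (tvx x) (tvx y) (tvx z)).
  apply le_INR in H.
  assert (INR (Nat.min (meet (tvx x) (tvx z)) (meet (tvx z) (tvx y))) =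
          Rmin (INR (meet (tvx x) (tvx z))) (INR (meet (tvx z) (tvx y)))).
  { destruct (Nat.le_ge_cases (meet (tvx x) (tvx z)) (meet (tvx z) (tvx y))) as [L|L].
    - rewrite Nat.min_l by auto. apply le_INR in L. rmin_solve.
    - rewrite Nat.min_r by auto. apply le_INR in L. rmin_solve. }
  rewrite H0 in H. rmin_solve.
Qed.

Lemma DD_sym x y : DD x y = DD y x.
Proof. unfold DD; rewrite mx_sym; ring. Qed.
Lemma DD_self x : valid T v x -> DD x x = 0.
Proof. intros; unfold DD; rewrite mx_self; auto; ring. Qed.
Lemma DD_nonneg x y : 0 <= DD x y.
Proof. unfold DD. pose proof (mx_le_l x y); pose proof (mx_le_r x y). lra. Qed.
Lemma DD_tri x y z : DD x y <= DD x z + DD z y.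
Proof.
  unfold DD. pose proof (mx_ult x y z). pose proof (mx_le_r x z). pose proof (mx_le_l z y).
  rmin_solve.
Qed.
Lemma DD_h x y : Rabs (hx x - hx y) <= DD x y.
Proof. unfold DD. pose proof (mx_le_l x y); pose proof (mx_le_r x y). rmin_solve. Qed.
Lemma hx_root x : valid T v x -> DD (PV v) x = hx x.
Proof.
  intros Vx. unfold DD, mx; simpl. rewrite meet_v, lvl_v. simpl.
  pose proof (hx_nonneg x Vx). rmin_solve.
Qed.

Lemma DD_zero x y : valid T v x -> valid T v y -> DD x y = 0 -> x = y.
Proof.
  intros Vx Vy E. unfold DD in E. pose proof (mx_le_l x y); pose proof (mx_le_r x y).
  assert (H1 : mx x y = hx x) by lra. assert (H2 : hx x = hx y) by lra.
  assert (H3 : hx x <= INR (meet (tvx x) (tvx y))) by (unfold mx in H1; rmin_solve).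
  destruct x as [a|a b t]; destruct y as [c|c d s]; simpl in *.
  - apply INR_eq in H2. apply INR_le in H3. pose proof (meet_le T v a c).
    f_equal. apply (anc_unique T v a c c); [apply meet_full; lia|apply anc_refl|auto].
  - apply valid_PE in Vy as [_ [_ [_ Hs]]]. exfalso; eapply INR_frac_neq; eauto.
  - apply valid_PE in Vx as [_ [_ [_ Ht]]]. exfalso; eapply INR_frac_neq; [|symmetry; eauto]; eauto.
  - apply valid_PE in Vx as [_ [Eb [Ea Ht]]]. apply valid_PE in Vy as [_ [Ed [Ec Hs]]].
    destruct (INR_frac_eq (lvl a) (lvl c) t s) as [E1 E2]; try lra. subst s.
    assert (M : (lvl b <= meet b d)%nat).
    { rewrite Eb. apply INR_le. rewrite S_INR.
      destruct (le_lt_dec (S (lvl a)) (meet b d)) as [L|L]; [apply le_INR in L; rewrite S_INR in L; lra|].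
      assert (meet b d <= lvl a)%nat by lia. apply le_INR in H4. lra. }
    pose proof (meet_le T v b d).
    assert (b = d) by (apply (anc_unique T v b d d); [apply meet_full; lia|apply anc_refl|lia]).
    subst d. f_equal; congruence.
Qed.

Definition pD (x y : pt T v) : R := DD (proj1_sig x) (proj1_sig y).

Lemma pdist_D x y : pdist T v x y = pD x y.
Proof. unfold pdist, pD. apply rdist_formula; apply proj2_sig. Qed.

Lemma pt_eq (x y : pt T v) : proj1_sig x = proj1_sig y -> x = y.
Proof. destruct x, y; simpl; intros ->; f_equal; apply proof_irrelevance. Qed.

End PtB.

End MB1.
Import MB1.

Module MB2.
Import ListNotations.
Open Scope R_scope.

Definition flr (r : R) : nat := Z.to_nat (up r - 1).

Lemma flr_spec r : 0 <= r -> INR (flr r) <= r < INR (flr r) + 1.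
Proof.
  intros Hr. destruct (archimed r) as [H1 H2]. unfold flr.
  assert (Hz : (0 <= up r - 1)%Z).
  { assert (0 < IZR (up r)) by lra. apply lt_0_IZR in H. lia. }
  rewrite INR_IZR_INZ, Z2Nat.id by auto. rewrite minus_IZR. simpl. lra.
Qed.

Lemma INR_min a b : INR (Nat.min a b) = Rmin (INR a) (INR b).
Proof.
  destruct (Nat.le_ge_cases a b) as [L|L].
  - rewrite Nat.min_l by auto. apply le_INR in L. rmin_solve.
  - rewrite Nat.min_r by auto. apply le_INR in L. rmin_solve.
Qed.

Section RhoB.
Variable T : Tree.
Notation V := (tV T).
Notation adj := (tadj T).
Variable v : V.
Notation lvl := (lvl T v).
Notation ancL := (ancL T v).
Notation par := (par T v).
Notation meet := (meet T v).
Notation hx := (hx T v).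
Notation mx := (mx T v).
Notation DD := (DD T v).
Notation tvx := (@tvx T).

Definition rho (r : R) (x : raw V) : raw V :=
  let r' := Rmax 0 r in
  if Rle_dec (hx x) r' then x
  else let n := flr r' in
    if Req_dec_T r' (INR n) then PV (ancL n (tvx x))
    else PE (ancL n (tvx x)) (ancL (S n) (tvx x)) (r' - INR n).

Lemma gdistR_lvl a : gdistR adj v a (lvl a).
Proof. apply gdist_spec. Qed.

Lemma rho_valid r x : valid T v x -> valid T v (rho r x).
Proof.
  intros Vx. unfold rho. set (r' := Rmax 0 r).
  assert (Hr : 0 <= r') by (unfold r'; rmin_solve).
  destruct Rle_dec as [H|H]; auto.
  pose proof (flr_spec r' Hr) as Hf. set (n := flr r') in *.
  destruct Req_dec_T as [E|E]; [exact I|].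
  pose proof (hx_tv T v x Vx) as Ht.
  assert (Hn : (S n <= lvl (tvx x))%nat).
  { apply INR_le. rewrite S_INR. destruct (le_lt_dec (S n) (lvl (tvx x))) as [L|L].
    - apply le_INR in L; rewrite S_INR in L; lra.
    - assert (lvl (tvx x) <= n)%nat by lia. apply le_INR in H0. lra. }
  split; [|split].
  - apply adj_par_ancL; auto.
  - exists n. split.
    + pose proof (gdistR_lvl (ancL n (tvx x))). rewrite lvl_ancL in H0 by lia. auto.
    + pose proof (gdistR_lvl (ancL (S n) (tvx x))). rewrite lvl_ancL in H0 by lia. auto.
  - lra.
Qed.

Lemma rho_h r x : valid T v x -> hx (rho r x) = Rmin (Rmax 0 r) (hx x).
Proof.
  intros Vx. unfold rho. set (r' := Rmax 0 r).
  assert (Hr : 0 <= r') by (unfold r'; rmin_solve).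
  destruct Rle_dec as [H|H]; [rmin_solve|].
  pose proof (flr_spec r' Hr) as Hf. set (n := flr r') in *.
  pose proof (hx_tv T v x Vx) as Ht.
  assert (Hn : (n <= lvl (tvx x))%nat).
  { apply INR_le. lra. }
  destruct Req_dec_T as [E|E]; simpl.
  - rewrite lvl_ancL by auto. rmin_solve.
  - rewrite lvl_ancL by auto. rmin_solve.
Qed.

Lemma rho_mx r x z : valid T v x -> valid T v z ->
  mx (rho r x) z = Rmin (Rmin (Rmax 0 r) (hx x)) (mx x z).
Proof.
  intros Vx Vz. pose proof (rho_h r x Vx) as Hh. revert Hh. unfold rho. set (r' := Rmax 0 r).
  assert (Hr : 0 <= r') by (unfold r'; rmin_solve).
  pose proof (mx_le_l T v x z).
  destruct Rle_dec as [H1|H1]; intros Hh; [rmin_solve|].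
  pose proof (flr_spec r' Hr) as Hf. set (n := flr r') in *.
  pose proof (hx_tv T v x Vx) as Ht.
  assert (Hn : (S n <= lvl (tvx x))%nat \/ r' = INR n).
  { destruct (Req_dec_T r' (INR n)); auto. left.
    apply INR_le. rewrite S_INR. destruct (le_lt_dec (S n) (lvl (tvx x))) as [L|L].
    - apply le_INR in L; rewrite S_INR in L; lra.
    - assert (lvl (tvx x) <= n)%nat by lia. apply le_INR in H0. lra. }
  assert (Hn0 : (n <= lvl (tvx x))%nat) by (apply INR_le; lra).
  destruct Req_dec_T as [E|E]; unfold mx in *; simpl in *; rewrite Hh.
  - rewrite meet_ancL by auto. rewrite INR_min. rewrite <- E. rmin_solve.
  - destruct Hn as [Hn|Hn]; [|contradiction].
    rewrite meet_ancL by auto. rewrite INR_min, S_INR. rmin_solve.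
Qed.

Lemma rho_lip r r' x y : valid T v x -> valid T v y ->
  DD (rho r x) (rho r' y) <= Rabs (Rmax 0 r - Rmax 0 r') + DD x y.
Proof.
  intros Vx Vy. unfold DD.
  rewrite rho_mx by (auto; apply rho_valid; auto).
  rewrite mx_sym, rho_mx by auto. rewrite !rho_h by auto. rewrite (mx_sym T v y x).
  pose proof (mx_le_l T v x y). pose proof (mx_le_r T v x y).
  rmin_solve.
Qed.

Lemma rho_valid_pt r (x : pt T v) : valid T v (rho r (proj1_sig x)).
Proof. apply rho_valid, proj2_sig. Qed.

Definition rhoP (r : R) (x : pt T v) : pt T v := exist _ (rho r (proj1_sig x)) (rho_valid_pt r x).

Lemma rho_self r x : valid T v x -> hx x <= r -> rho r x = x.
Proof.
  intros Vx H. unfold rho. destruct Rle_dec as [H1|H1]; auto. exfalso; apply H1.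
  unfold Rmax; destruct Rle_dec; lra.
Qed.

Lemma inSub_iff c x : valid T v x -> (inSub T v c x <-> mx (PV c) x = INR (lvl c)).
Proof.
  intros Vx. pose proof (meet_le T v c (tvx x)) as Hm.
  destruct x as [a|a b t]; unfold mx; simpl.
  - split.
    + intros H. rewrite anc_meet by auto. pose proof (anc_lvl T v _ _ H) as H1. apply le_INR in H1. rmin_solve.
    + intros E. apply meet_full.
      assert (H0 : INR (lvl c) <= INR (meet c a)) by (rewrite <- E; rmin_solve).
      apply INR_le in H0. simpl in Hm. lia.
  - apply valid_PE in Vx as [Hab [Eb [Ea Ht]]]. simpl in Hm. split.
    + intros H1. assert (Hcb : anc T v c b) by (eapply anc_trans; [eauto|rewrite Ea; apply anc_par]).
      rewrite anc_meet by auto. pose proof (anc_lvl T v _ _ H1) as H0. apply le_INR in H0. rmin_solve.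
    + intros E.
      assert (H0 : INR (lvl c) <= INR (meet c b)) by (rewrite <- E; rmin_solve).
      apply INR_le in H0.
      assert (H2 : INR (lvl c) <= INR (lvl a) + t) by (rewrite <- E; rmin_solve).
      assert (Hca : (lvl c <= lvl a)%nat).
      { destruct (le_lt_dec (lvl c) (lvl a)) as [L|L]; auto. apply le_INR in L. rewrite S_INR in L. lra. }
      apply anc_iff. split; auto.
      assert (Hcb : anc T v c b) by (apply meet_full; lia).
      apply anc_eq in Hcb. rewrite Ea at 1. rewrite par_ancL by lia. rewrite ancL_ancL by lia. auto.
Qed.

Definition lab (k : nat) (x : raw V) : V := ancL (S k) (tvx x).

Lemma lab_lvl k x : valid T v x -> INR (S k) <= hx x -> lvl (lab k x) = S k.
Proof.
  intros Vx H. pose proof (hx_tv T v x Vx). apply lvl_ancL. apply INR_le. lra.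
Qed.

Lemma lab_inSub k x : valid T v x -> INR (S k) <= hx x -> inSub T v (lab k x) x.
Proof.
  intros Vx H. pose proof (hx_tv T v x Vx). assert (Hk : (S k <= lvl (tvx x))%nat) by (apply INR_le; lra).
  apply inSub_iff; auto. unfold mx, lab. simpl.
  rewrite anc_meet by (apply anc_ancL; auto). rewrite lvl_ancL by auto. rmin_solve.
Qed.

Lemma inSub_h c x : valid T v x -> inSub T v c x -> INR (lvl c) <= hx x.
Proof. intros Vx H. apply inSub_iff in H; auto. rewrite <- H. apply mx_le_r. Qed.

Lemma inSub_lab k c x : valid T v x -> inSub T v c x -> lvl c = S k -> c = lab k x.
Proof.
  intros Vx H E. pose proof (meet_le T v c (tvx x)). apply inSub_iff in H; auto.
  unfold mx in H; simpl in H.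
  assert (INR (lvl c) <= INR (meet c (tvx x))) by (rewrite <- H; rmin_solve).
  apply INR_le in H1. unfold lab. rewrite <- E. apply anc_eq. apply meet_full. lia.
Qed.

Lemma lab_close k x y : valid T v x -> valid T v y -> INR (S k) <= hx x -> INR (S k) <= hx y ->
  DD x y < 2 -> lab k x = lab k y.
Proof.
  intros Vx Vy Hx Hy HD. unfold DD in HD.
  assert (Hm : INR k < mx x y) by (rewrite S_INR in *; lra).
  unfold mx in Hm.
  assert (INR k < INR (meet (tvx x) (tvx y))) by rmin_solve.
  apply INR_lt in H.
  pose proof (hx_tv T v x Vx). pose proof (hx_tv T v y Vy).
  unfold lab. apply meet_iff; try lia; apply INR_le; lra.
Qed.

Lemma inSub_mx c x y : valid T v x -> valid T v y -> inSub T v c x -> inSub T v c y ->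
  INR (lvl c) <= mx x y.
Proof.
  intros Vx Vy H1 H2. apply inSub_iff in H1; auto. apply inSub_iff in H2; auto.
  pose proof (mx_ult T v x y (PV c)). rewrite mx_sym in H1. rewrite H1, H2 in H. rmin_solve.
Qed.

Lemma rho_inSub c x : valid T v x -> inSub T v c x -> rho (INR (lvl c)) x = PV c.
Proof.
  intros Vx H. apply (DD_zero T v); [apply rho_valid; auto|exact I|].
  pose proof (inSub_h c x Vx H). pose proof (pos_INR (lvl c)).
  apply inSub_iff in H; auto.
  unfold DD. rewrite rho_mx by (auto; exact I). rewrite rho_h by auto. rewrite mx_sym, H.
  simpl. rmin_solve.
Qed.

End RhoB.

End MB2.
Import MB2.

Module Cmod.
Open Scope R_scope.

Lemma interval_const {X : Type} (F : R -> X) a b : a <= b ->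
  (forall s, a <= s <= b -> exists d, 0 < d /\ forall s', a <= s' <= b -> Rabs (s - s') < d -> F s' = F s) ->
  F b = F a.
Proof.
  intros Hab Hloc.
  set (E := fun s => a <= s <= b /\ F s = F a).
  assert (Hb : bound E) by (exists b; intros s [Hs _]; lra).
  assert (He : exists s, E s) by (exists a; split; [lra|auto]).
  destruct (completeness E Hb He) as [c [Hub Hlub]].
  assert (Hac : a <= c) by (apply Hub; split; [lra|auto]).
  assert (Hcb : c <= b) by (apply Hlub; intros s [Hs _]; lra).
  destruct (Hloc c (conj Hac Hcb)) as [d [Hd Hl]].
  assert (Fc : F c = F a).
  { destruct (classic (exists s, E s /\ c - d < s)) as [[s [[Hs Es] Hs']]|Hno].
    - assert (s <= c) by (apply Hub; split; auto).
      rewrite <- Es. symmetry. apply Hl; auto. unfold Rabs; destruct Rcase_abs; lra.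
    - exfalso. assert (c <= c - d); [|lra]. apply Hlub. intros s Es.
      destruct (Rle_dec s (c - d)); auto. exfalso; apply Hno; exists s; split; auto; lra. }
  destruct (Req_dec c b) as [->|Hne]; auto.
  set (s' := Rmin b (c + d / 2)).
  assert (Hs' : a <= s' <= b) by (unfold s', Rmin; destruct Rle_dec; lra).
  assert (E s').
  { split; auto. rewrite <- Fc. apply Hl; auto. unfold s', Rmin, Rabs; destruct Rle_dec; destruct Rcase_abs; lra. }
  apply Hub in H. unfold s', Rmin in H; destruct Rle_dec; lra.
Qed.

End Cmod.
Import Cmod.

Module MD0.
Open Scope nat_scope.

Section Bond.
Variable A : tower.

Lemma bond_le n m x y : bond A n m x y -> n <= m.
Proof. intros H; induction H; lia. Qed.

Lemma bond_refl_inv n x y : bond A n n x y -> y = x.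
Proof.
  intros H. inversion H.
  - match goal with E : existT _ _ _ = existT _ _ _ |- _ => apply inj_pair2_eq_dec in E; [|exact Nat.eq_dec] end.
    subst. reflexivity.
  - match goal with B : bond A n _ _ _ |- _ => apply bond_le in B end. lia.
Qed.

Lemma bond_step_inv n m x y : n <= m -> bond A n (S m) x y -> bond A n m (tp A m x) y.
Proof.
  intros Hnm H. inversion H.
  - lia.
  - repeat match goal with E : existT _ _ _ = existT _ _ _ |- _ => apply inj_pair2_eq_dec in E; [|exact Nat.eq_dec] end.
    subst. auto.
Qed.

Lemma bond_fun n m x y1 y2 : bond A n m x y1 -> bond A n m x y2 -> y1 = y2.
Proof.
  intros H1; revert y2; induction H1; intros y2 H2.
  - symmetry; apply bond_refl_inv; auto.
  - apply IHbond. apply bond_step_inv; auto. apply bond_le in H1; auto.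
Qed.

Lemma bond_exists n m x : n <= m -> exists y, bond A n m x y.
Proof.
  revert x; induction m; intros x Hnm.
  - assert (n = 0) by lia. subst. exists x; constructor.
  - destruct (Nat.eq_dec n (S m)) as [->|Hne]. + exists x; constructor.
    + destruct (IHm (tp A m x)) as [y Hy]; [lia|]. exists y; constructor; auto.
Qed.

Lemma bond_trans n k m x y z : bond A n k y z -> bond A k m x y -> bond A n m x z.
Proof.
  intros H1 H2; induction H2; auto. constructor; auto.
Qed.

Lemma bond_one n x : bond A n (S n) x (tp A n x).
Proof. constructor; constructor. Qed.

End Bond.

End MD0.
Import MD0.

Module MD1.
Open Scope R_scope.

Section Eta1.
Variable T : Tree.
Variable v : tV T.

Lemma Cset_lvl k (c : Cset T v k) : lvl T v (proj1_sig c) = S k.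
Proof. destruct c as [c Hc]; simpl. apply gdist_eq in Hc. auto. Qed.

Lemma Cset_eq k (c1 c2 : Cset T v k) : proj1_sig c1 = proj1_sig c2 -> c1 = c2.
Proof. destruct c1, c2; simpl; intros ->; f_equal; apply proof_irrelevance. Qed.

Lemma gdistR_of_lvl a k : lvl T v a = S k -> gdistR (tadj T) v a (S k).
Proof. intros E. rewrite <- E. apply gdist_spec. Qed.

Lemma parent_val k (c : Cset T v (S k)) : proj1_sig (parent T v k c) = par T v (proj1_sig c).
Proof.
  unfold parent. simpl.
  destruct (constructive_indefinite_description _ _) as [u [Hu1 Hu2]]. simpl.
  pose proof (Cset_lvl _ c). apply gdist_eq in Hu2. apply par_unique.
  - apply tadj_sym; auto.
  - change (gdist T v u) with (lvl T v u) in Hu2. lia.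
Qed.

Lemma bond_anc n m (x : Cset T v m) (y : Cset T v n) :
  bond (eta T v) n m x y -> anc T v (proj1_sig y) (proj1_sig x).
Proof.
  intros H; induction H. - apply anc_refl.
  - change (tp (eta T v) m x) with (parent T v m x) in IHbond. rewrite parent_val in IHbond. eapply anc_trans; [eauto|apply anc_par].
Qed.

Lemma anc_bond n m (x : Cset T v m) (y : Cset T v n) : (n <= m)%nat ->
  anc T v (proj1_sig y) (proj1_sig x) -> bond (eta T v) n m x y.
Proof.
  intros Hnm H. destruct (bond_exists (eta T v) n m x Hnm) as [y' Hy'].
  replace y with y'; auto. apply Cset_eq. apply (anc_unique T v _ _ (proj1_sig x)).
  - apply bond_anc; auto.
  - auto.
  - rewrite !Cset_lvl; auto.
Qed.

Lemma inSub_anc c c' x : anc T v c c' -> inSub T v c' x -> inSub T v c x.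
Proof. destruct x; simpl; intros; eapply anc_trans; eauto. Qed.

Lemma inSub_vpt c : inSub T v c (proj1_sig (vpt T v c)).
Proof. simpl. apply anc_refl. Qed.

Lemma inSub_bond n m (x : Cset T v m) (y : Cset T v n) p :
  bond (eta T v) n m x y -> inSub T v (proj1_sig x) p -> inSub T v (proj1_sig y) p.
Proof. intros H1 H2. eapply inSub_anc; [apply bond_anc; eauto|auto]. Qed.

Lemma hx_vpt a : hx T v (proj1_sig (vpt T v a)) = INR (lvl T v a).
Proof. reflexivity. Qed.

Lemma pdist_root (x : pt T v) : pdist T v (vpt T v v) x = hx T v (proj1_sig x).
Proof. rewrite pdist_D. unfold pD. simpl. apply hx_root, proj2_sig. Qed.

End Eta1.

Section Eta2.
Variables (T : Tree) (v : tV T) (T' : Tree) (w : tV T').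

Lemma IsEtaMor_lab f m k (c : Cset T v (mPhi m k)) x : IsEtaMor T v T' w f m ->
  inSub T v (proj1_sig c) (proj1_sig x) -> proj1_sig (mf m k c) = lab T' w k (proj1_sig (f x)).
Proof.
  intros [_ [_ H3]] Hin. apply inSub_lab; [apply proj2_sig|apply H3; auto|apply Cset_lvl].
Qed.

Lemma IsEtaMor_IsMor f m : IsEtaMor T v T' w f m -> IsMor m.
Proof.
  intros HE n n' Hn. exists (Nat.max (mPhi m n) (mPhi m n')). split; [lia|split; [lia|]].
  intros x y1 y2 z B1 B2 B3. apply Cset_eq.
  set (X := vpt T v (proj1_sig x)).
  rewrite (IsEtaMor_lab f m n y1 X HE) by (eapply inSub_bond; eauto; apply inSub_vpt).
  symmetry. apply inSub_lab; [apply proj2_sig| |apply Cset_lvl].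
  eapply inSub_bond; [exact B3|]. destruct HE as [_ [_ H3]]. apply H3.
  eapply inSub_bond; eauto; apply inSub_vpt.
Qed.

End Eta2.

Lemma part_id (T : Tree) (v : tV T) m :
  IsEtaMor T v T v (fun x => x) m -> mor_eq m (mor_id (eta T v)).
Proof.
  intros HE n. exists (Nat.max (mPhi m n) n). split; [lia|split; [simpl; lia|]].
  intros x y1 y2 B1 B2. simpl in *. apply Cset_eq.
  set (X := vpt T v (proj1_sig x)).
  rewrite (IsEtaMor_lab T v T v _ m n y1 X HE) by (eapply inSub_bond; eauto; apply inSub_vpt).
  symmetry. apply inSub_lab; [apply proj2_sig| |apply Cset_lvl].
  eapply inSub_bond; eauto; apply inSub_vpt.
Qed.

Lemma part_comp (T1 : Tree) (v1 : tV T1) (T2 : Tree) (v2 : tV T2) (T3 : Tree) (v3 : tV T3)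
  (f : pt T1 v1 -> pt T2 v2) (g : pt T2 v2 -> pt T3 v3) m1 m2 m3 :
  IsEtaMor T1 v1 T2 v2 f m1 -> IsEtaMor T2 v2 T3 v3 g m2 ->
  IsEtaMor T1 v1 T3 v3 (fun x => g (f x)) m3 -> mor_eq m3 (mor_comp m1 m2).
Proof.
  intros H1 H2 H3 n. exists (Nat.max (mPhi m3 n) (mPhi m1 (mPhi m2 n))).
  split; [lia|split; [simpl; lia|]].
  intros x y1 y2 B1 B2. simpl in *. apply Cset_eq.
  set (X := vpt T1 v1 (proj1_sig x)).
  rewrite (IsEtaMor_lab _ _ _ _ _ m3 n y1 X H3) by (eapply inSub_bond; eauto; apply inSub_vpt).
  rewrite (IsEtaMor_lab _ _ _ _ _ m2 n _ (f X) H2). { reflexivity. }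
  destruct H1 as [_ [_ H1]]. apply H1. eapply inSub_bond; eauto; apply inSub_vpt.
Qed.

End MD1.
Import MD1.

Module MD2.
Open Scope R_scope.

Lemma big_nat (N : R) : exists L : nat, N < INR L.
Proof.
  exists (S (flr (Rmax 0 N))). pose proof (flr_spec (Rmax 0 N)). rewrite S_INR.
  assert (0 <= Rmax 0 N) by (unfold Rmax; destruct Rle_dec; lra).
  specialize (H H0). unfold Rmax in *. destruct Rle_dec; lra.
Qed.

Lemma DD_pdist (T : Tree) (v : tV T) (x y : pt T v) : DD T v (proj1_sig x) (proj1_sig y) = pdist T v x y.
Proof. rewrite pdist_D. reflexivity. Qed.

Lemma Rabs_sym_lt a b d : Rabs (a - b) < d -> Rabs (b - a) < d.
Proof. rewrite Rabs_minus_sym; auto. Qed.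

Lemma part_htpy (T : Tree) (v : tV T) (T' : Tree) (w : tV T') (f g : pt T v -> pt T' w) m m' :
  rmp_homotopic T v T' w f g ->
  IsEtaMor T v T' w f m -> IsEtaMor T v T' w g m' -> mor_eq m m'.
Proof.
  intros [H [H0 [H1 [Hroot [Hcont Hprop]]]]] Hm Hm' n.
  destruct (Hprop (INR (S n))) as [N [HN HNp]]; [apply lt_0_INR; lia|].
  destruct (big_nat N) as [L0 HL0].
  exists (Nat.max (Nat.max (mPhi m n) (mPhi m' n)) L0).
  split; [lia|split; [lia|]].
  intros x y1 y2 B1 B2. apply Cset_eq.
  set (X := vpt T v (proj1_sig x)).
  rewrite (IsEtaMor_lab _ _ _ _ _ m n y1 X Hm) by (eapply inSub_bond; eauto; apply inSub_vpt).
  rewrite (IsEtaMor_lab _ _ _ _ _ m' n y2 X Hm') by (eapply inSub_bond; eauto; apply inSub_vpt).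
  rewrite <- H0, <- H1.
  assert (Hh : forall s, 0 <= s <= 1 -> INR (S n) <= hx T' w (proj1_sig (H X s))).
  { intros s Hs. destruct (Rle_dec (INR (S n)) (hx T' w (proj1_sig (H X s)))) as [Hle|Hlt]; auto.
    exfalso. assert (pdist T' w (vpt T' w w) (H X s) < INR (S n)) by (rewrite pdist_root; lra).
    apply HNp in H2; auto. rewrite pdist_root in H2. unfold X in H2. rewrite hx_vpt, Cset_lvl in H2.
    assert (INR L0 <= INR (S (Nat.max (Nat.max (mPhi m n) (mPhi m' n)) L0))) by (apply le_INR; lia).
    lra. }
  symmetry. apply (interval_const (fun s => lab T' w n (proj1_sig (H X s))) 0 1); [lra|].
  intros s Hs. destruct (Hcont X s 2 Hs) as [d [Hd Hdd]]; [lra|].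
  exists d; split; auto. intros s' Hs' Hss'.
  symmetry. apply lab_close; try apply proj2_sig; try apply Hh; auto.
  rewrite DD_pdist.
  apply Hdd; auto. rewrite pdist_D. unfold pD. rewrite DD_self by apply proj2_sig. auto.
Qed.

Fixpoint mkPhi (N : nat -> nat) (k : nat) : nat :=
  match k with
  | O => N O
  | S k' => Nat.max (S (mkPhi N k')) (N (S k'))
  end.

Lemma mkPhi_N N k : (N k <= mkPhi N k)%nat.
Proof. destruct k; cbn [mkPhi]; lia. Qed.

Lemma mkPhi_inc N k : (mkPhi N k < mkPhi N (S k))%nat.
Proof. cbn [mkPhi]; lia. Qed.

Section Part1.
Variables (T : Tree) (v : tV T) (T' : Tree) (w : tV T').

Lemma labC_proof k (y : pt T' w) : INR (S k) <= hx T' w (proj1_sig y) ->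
  gdistR (tadj T') w (lab T' w k (proj1_sig y)) (S k).
Proof. intros H. apply gdistR_of_lvl. apply lab_lvl; auto. apply proj2_sig. Qed.

Lemma part_exist (f : pt T v -> pt T' w) : RCP T v T' w f -> exists m, IsEtaMor T v T' w f m /\ IsMor m.
Proof.
  intros [Hcont [Hprop Hroot]].
  assert (HN : forall k, exists N : nat, forall x, pdist T' w (vpt T' w w) (f x) < INR (S k) ->
                 pdist T v (vpt T v v) x < INR N).
  { intros k. destruct (Hprop (fun y => pdist T' w (vpt T' w w) y < INR (S k))) as [c0 [r0 Hc0]].
    { exists (vpt T' w w), (INR (S k)). auto. }
    destruct (big_nat (hx T v (proj1_sig c0) + r0)) as [N HN]. exists N. intros x Hx.
    apply Hc0 in Hx. rewrite pdist_D in Hx. unfold pD in Hx. rewrite pdist_root.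
    pose proof (DD_h T v (proj1_sig c0) (proj1_sig x)). unfold Rabs in H; destruct Rcase_abs; lra. }
  set (Nf := fun k => proj1_sig (constructive_indefinite_description _ (HN k))).
  assert (HNf : forall k x, pdist T' w (vpt T' w w) (f x) < INR (S k) -> pdist T v (vpt T v v) x < INR (Nf k)).
  { intros k. exact (proj2_sig (constructive_indefinite_description _ (HN k))). }
  set (Phi := mkPhi Nf).
  assert (Hfar : forall k (x : pt T v), INR (Phi k) <= hx T v (proj1_sig x) -> INR (S k) <= hx T' w (proj1_sig (f x))).
  { intros k x Hx. destruct (Rle_dec (INR (S k)) (hx T' w (proj1_sig (f x)))) as [H|H]; auto. exfalso.
    assert (pdist T' w (vpt T' w w) (f x) < INR (S k)) by (rewrite pdist_root; lra).
    apply HNf in H0. rewrite pdist_root in H0. pose proof (le_INR _ _ (mkPhi_N Nf k)). fold Phi in H1. lra. }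
  assert (Hc : forall k (c : Cset T v (Phi k)), INR (S k) <= hx T' w (proj1_sig (f (vpt T v (proj1_sig c))))).
  { intros k c. apply Hfar. rewrite hx_vpt, Cset_lvl. apply le_INR; lia. }
  set (mm := @Build_mor (eta T v) (eta T' w) Phi (fun k (c : tX (eta T v) (Phi k)) =>
          (exist (fun a => gdistR (tadj T') w a (S k)) (lab T' w k (proj1_sig (f (vpt T v (proj1_sig c)))))
             (labC_proof k _ (Hc k c)) : tX (eta T' w) k))).
  assert (HE : IsEtaMor T v T' w f mm).
  { split; [|split].
    - intros k. apply mkPhi_inc.
    - intros k x Hx. change (mPhi mm k) with (Phi k). apply HNf in Hx. pose proof (le_INR _ _ (mkPhi_N Nf k)). fold Phi in H.
      rewrite S_INR. lra.
    - intros k c x Hin. change (proj1_sig (mf mm k c)) with (lab T' w k (proj1_sig (f (vpt T v (proj1_sig c))))).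
      assert (Vx := proj2_sig x).
      assert (Hcx : INR (lvl T v (proj1_sig c)) <= hx T v (proj1_sig x)) by (apply inSub_h; auto).
      rewrite Cset_lvl in Hcx. change (mPhi mm k) with (Phi k) in Hcx.
      assert (Lk : INR (Phi k) <= INR (S (Phi k))) by (apply le_INR; lia).
      assert (E : lab T' w k (proj1_sig (f x)) = lab T' w k (proj1_sig (f (vpt T v (proj1_sig c))))).
      { set (a := INR (S (Phi k))) in *. set (b := hx T v (proj1_sig x)).
        assert (Ea : rhoP T v a x = vpt T v (proj1_sig c)).
        { apply pt_eq. simpl. unfold a. assert (Hl : INR (S (Phi k)) = INR (lvl T v (proj1_sig c))) by (rewrite Cset_lvl; reflexivity). rewrite Hl. apply rho_inSub; auto. }
        assert (Eb : rhoP T v b x = x).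
        { apply pt_eq. simpl. apply rho_self; auto; unfold b; lra. }
        rewrite <- Ea. rewrite <- Eb at 1.
        assert (Ha0 : 0 <= a) by (unfold a; apply pos_INR).
        apply (interval_const (fun r => lab T' w k (proj1_sig (f (rhoP T v r x)))) a b); [unfold a, b in *; lra|].
        unfold a, b in *. intros r Hr. destruct (Hcont (rhoP T v r x) 2) as [d [Hd Hdd]]; [lra|].
        exists d; split; auto. intros r' Hr' Hrr.
        symmetry. apply lab_close; try apply proj2_sig.
        + apply Hfar. simpl. rewrite rho_h by auto. unfold Rmin, Rmax; repeat destruct Rle_dec; lra.
        + apply Hfar. simpl. rewrite rho_h by auto. unfold Rmin, Rmax; repeat destruct Rle_dec; lra.
        + rewrite DD_pdist. apply Hdd.
          rewrite pdist_D. unfold pD. simpl. eapply Rle_lt_trans; [apply rho_lip; auto|].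
          rewrite DD_self by auto. unfold Rmax. repeat destruct Rle_dec; try lra. }
      rewrite <- E. apply lab_inSub; [apply proj2_sig|]. apply Hfar. lra. }
  exists mm. split; auto. eapply IsEtaMor_IsMor; eauto.
Qed.

End Part1.

End MD2.
Import MD2.

Module MF1.
Open Scope R_scope.

Lemma Rabs_bnd x a : Rabs x <= a -> -a <= x <= a.
Proof. unfold Rabs; destruct Rcase_abs; lra. Qed.

Lemma Rmax0_lip r r' : Rabs (Rmax 0 r - Rmax 0 r') <= Rabs (r - r').
Proof. rmin_solve. Qed.

Section FaithB.
Variable T : Tree.
Variable v : tV T.
Notation hx := (hx T v).
Notation mx := (mx T v).
Notation DD := (DD T v).
Notation rho := (rho T v).
Notation valid := (valid T v).

Lemma rho_lip' r r' x y : valid x -> valid y -> DD (rho r x) (rho r' y) <= Rabs (r - r') + DD x y.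
Proof. intros. pose proof (rho_lip T v r r' x y H H0). pose proof (Rmax0_lip r r'). lra. Qed.

Lemma rho_meet A B : valid A -> valid B -> DD (rho (mx A B) A) (rho (mx A B) B) = 0.
Proof.
  intros VA VB. unfold MB1.DD. rewrite (rho_mx T v (mx A B) A (rho (mx A B) B)); [|auto|apply rho_valid; auto].
  rewrite (mx_sym T v A (rho (mx A B) B)), rho_mx by auto. rewrite !rho_h by auto. rewrite (mx_sym T v B A).
  pose proof (mx_le_l T v A B). pose proof (mx_le_r T v A B). pose proof (mx_nonneg T v A B VA VB).
  rmin_solve.
Qed.

Lemma mx_lip A B A' B' : Rabs (mx A B - mx A' B') <= DD A A' + DD B B'.
Proof.
  pose proof (Rabs_bnd _ _ (DD_h T v A A')). pose proof (Rabs_bnd _ _ (DD_h T v B B')).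
  pose proof (DD_tri T v A B A'). pose proof (DD_tri T v A' B B').
  pose proof (DD_tri T v A' B' A). pose proof (DD_tri T v A B' B).
  pose proof (DD_sym T v A' A). pose proof (DD_sym T v B' B).
  assert (E1 : mx A B = (hx A + hx B - DD A B) / 2) by (unfold MB1.DD; lra).
  assert (E2 : mx A' B' = (hx A' + hx B' - DD A' B') / 2) by (unfold MB1.DD; lra).
  rewrite E1, E2. apply Rabs_le. split; lra.
Qed.

Definition Eraw (A B : raw (tV T)) (s : R) : raw (tV T) :=
  if Rle_dec s (1/2) then rho ((1 - 2*s) * hx A + 2 * s * mx A B) A
  else rho ((2 - 2*s) * mx A B + (2*s - 1) * hx B) B.

Lemma Eraw_valid A B s : valid A -> valid B -> valid (Eraw A B s).
Proof. intros; unfold Eraw; destruct Rle_dec; apply rho_valid; auto. Qed.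

Lemma E_bound Ax Bx Ay By s s' : valid Ax -> valid Bx -> valid Ay -> valid By ->
  0 <= s <= 1 -> 0 <= s' <= 1 ->
  DD (Eraw Ax Bx s) (Eraw Ay By s') <=
  4 * (DD Ax Ay + DD Bx By) + 4 * Rabs (s - s') * (hx Ax + hx Bx + DD Ax Ay + DD Bx By).
Proof.
  intros VAx VBx VAy VBy Hs Hs'.
  set (a := DD Ax Ay). set (b := DD Bx By). set (sg := Rabs (s - s')).
  set (p := mx Ax Bx). set (p' := mx Ay By).
  assert (Ha : 0 <= a) by apply DD_nonneg. assert (Hb : 0 <= b) by apply DD_nonneg.
  assert (Hsg1 : s - s' <= sg) by apply Rle_abs.
  assert (Hsg2 : s' - s <= sg) by (unfold sg; rewrite Rabs_minus_sym; apply Rle_abs).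
  assert (HhA := Rabs_bnd _ _ (DD_h T v Ax Ay)). assert (HhB := Rabs_bnd _ _ (DD_h T v Bx By)).
  assert (Hp := Rabs_bnd _ _ (mx_lip Ax Bx Ay By)). fold a b p p' in HhA, HhB, Hp.
  assert (Hp1 : 0 <= p) by (apply mx_nonneg; auto). assert (Hp1' : 0 <= p') by (apply mx_nonneg; auto).
  assert (Hp2 : p <= hx Ax) by apply mx_le_l. assert (Hp3 : p <= hx Bx) by apply mx_le_r.
  assert (Hp2' : p' <= hx Ay) by apply mx_le_l. assert (Hp3' : p' <= hx By) by apply mx_le_r.
  assert (Hsg0 : 0 <= sg) by apply Rabs_pos.
  assert (HAB : DD Ax Ax = 0) by (apply DD_self; auto).
  assert (HBB : DD Bx Bx = 0) by (apply DD_self; auto).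
  unfold Eraw. fold p p'.
  destruct (Rle_dec s (1/2)) as [L1|L1]; destruct (Rle_dec s' (1/2)) as [L2|L2].
  - eapply Rle_trans; [apply rho_lip'; auto|]. fold a.
    assert (Rabs (((1 - 2*s) * hx Ax + 2 * s * p) - ((1 - 2*s') * hx Ay + 2 * s' * p')) <= 2*a + b + 2*sg*(hx Ax + a)).
    { apply Rabs_le. split; nra. }
    nra.
  - eapply Rle_trans; [apply DD_tri with (z := rho p Ax)|].
    eapply Rle_trans; [apply Rplus_le_compat_l; apply DD_tri with (z := rho p Bx)|].
    pose proof (rho_lip' ((1 - 2*s) * hx Ax + 2 * s * p) p Ax Ax VAx VAx).
    pose proof (rho_meet Ax Bx VAx VBx). fold p in H0.
    pose proof (rho_lip' p ((2 - 2*s') * p' + (2*s' - 1) * hx By) Bx By VBx VBy). fold b in H1.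
    assert (Rabs (((1 - 2*s) * hx Ax + 2 * s * p) - p) <= 2 * sg * hx Ax) by (apply Rabs_le; split; nra).
    assert (Rabs (p - ((2 - 2*s') * p' + (2*s' - 1) * hx By)) <= a + b + 2 * sg * (hx Bx + b))
      by (apply Rabs_le; split; nra).
    nra.
  - eapply Rle_trans; [apply DD_tri with (z := rho p Bx)|].
    eapply Rle_trans; [apply Rplus_le_compat_l; apply DD_tri with (z := rho p Ax)|].
    pose proof (rho_lip' ((2 - 2*s) * p + (2*s - 1) * hx Bx) p Bx Bx VBx VBx).
    pose proof (rho_meet Ax Bx VAx VBx). fold p in H0. rewrite DD_sym in H0.
    pose proof (rho_lip' p ((1 - 2*s') * hx Ay + 2 * s' * p') Ax Ay VAx VAy). fold a in H1.
    assert (Rabs (((2 - 2*s) * p + (2*s - 1) * hx Bx) - p) <= 2 * sg * hx Bx) by (apply Rabs_le; split; nra).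
    assert (Rabs (p - ((1 - 2*s') * hx Ay + 2 * s' * p')) <= a + b + 2 * sg * (hx Ax + a))
      by (apply Rabs_le; split; nra).
    nra.
  - eapply Rle_trans; [apply rho_lip'; auto|]. fold b.
    assert (Rabs (((2 - 2*s) * p + (2*s - 1) * hx Bx) - ((2 - 2*s') * p' + (2*s' - 1) * hx By)) <= a + 2*b + 2*sg*(hx Bx + b)).
    { apply Rabs_le. split; nra. }
    nra.
Qed.

Lemma E_height A B s : valid A -> valid B -> 0 <= s <= 1 -> mx A B <= hx (Eraw A B s).
Proof.
  intros VA VB Hs. pose proof (mx_le_l T v A B). pose proof (mx_le_r T v A B).
  pose proof (mx_nonneg T v A B VA VB).
  unfold Eraw. destruct Rle_dec; rewrite rho_h by auto.
  - assert (mx A B <= (1 - 2*s) * hx A + 2 * s * mx A B) by nra. rmin_solve.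
  - assert (mx A B <= (2 - 2*s) * mx A B + (2*s - 1) * hx B) by nra. rmin_solve.
Qed.

Lemma E_0 A B : valid A -> Eraw A B 0 = A.
Proof.
  intros VA. unfold Eraw. destruct Rle_dec; [|lra]. apply rho_self; auto.
  lra.
Qed.

Lemma E_1 A B : valid B -> Eraw A B 1 = B.
Proof.
  intros VB. unfold Eraw. destruct Rle_dec; [lra|]. apply rho_self; auto.
  lra.
Qed.

End FaithB.

End MF1.
Import MF1.

Module MF2.
Open Scope R_scope.

Section Faith.
Variables (T : Tree) (v : tV T) (T' : Tree) (w : tV T').

Definition Hh (f g : pt T v -> pt T' w) (x : pt T v) (s : R) : pt T' w :=
  if Rle_dec s 0 then f x else if Rle_dec 1 s then g x else
  exist _ (Eraw T' w (proj1_sig (f x)) (proj1_sig (g x)) s)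
    (Eraw_valid T' w _ _ s (proj2_sig (f x)) (proj2_sig (g x))).

Lemma Hh_E f g x s : 0 <= s <= 1 -> proj1_sig (Hh f g x s) = Eraw T' w (proj1_sig (f x)) (proj1_sig (g x)) s.
Proof.
  intros Hs. unfold Hh. destruct (Rle_dec s 0).
  - replace s with 0 by lra. rewrite E_0; auto. apply proj2_sig.
  - destruct (Rle_dec 1 s).
    + replace s with 1 by lra. rewrite E_1; auto. apply proj2_sig.
    + reflexivity.
Qed.

Lemma rho_root r : rho T' w r (PV w) = PV w.
Proof.
  unfold rho. destruct Rle_dec as [H|H]; auto. exfalso; apply H. simpl. rewrite lvl_v. simpl.
  unfold Rmax; destruct Rle_dec; lra.
Qed.

Lemma part_faith (f g : pt T v -> pt T' w) m m' :
  RCP T v T' w f -> RCP T v T' w g ->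
  IsEtaMor T v T' w f m -> IsEtaMor T v T' w g m' -> mor_eq m m' ->
  rmp_homotopic T v T' w f g.
Proof.
  intros [Cf [_ Rf]] [Cg [_ Rg]] Hm Hm' Heq.
  exists (Hh f g). split; [|split; [|split; [|split]]].
  - intros x. unfold Hh. destruct (Rle_dec 0 0); [auto|lra].
  - intros x. unfold Hh. destruct (Rle_dec 1 0); [lra|]. destruct (Rle_dec 1 1); [auto|lra].
  - intros s Hs. rewrite Hh_E by auto. rewrite Rf, Rg. unfold Eraw. destruct Rle_dec; apply rho_root.
  - intros x s eps Hs Heps.
    set (A := proj1_sig (f x)). set (B := proj1_sig (g x)).
    set (K := hx T' w A + hx T' w B + 2).
    assert (HK : 2 <= K) by (unfold K; pose proof (hx_nonneg T' w A (proj2_sig (f x)));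
                                pose proof (hx_nonneg T' w B (proj2_sig (g x))); lra).
    set (e1 := Rmin 1 (eps / 32)).
    assert (He1 : 0 < e1 /\ e1 <= 1 /\ e1 <= eps / 32) by (unfold e1; rmin_solve).
    destruct (Cf x e1) as [df [Hdf Hf]]; [lra|].
    destruct (Cg x e1) as [dg [Hdg Hg]]; [lra|].
    set (ds := eps / (16 * K)).
    assert (Hds : 0 < ds) by (unfold ds; apply Rdiv_lt_0_compat; lra).
    exists (Rmin (Rmin df dg) ds). split; [rmin_solve|].
    intros y s' Hs' Hxy Hss.
    assert (Pf : pdist T v x y < df) by rmin_solve.
    assert (Pg : pdist T v x y < dg) by rmin_solve.
    assert (Ps : Rabs (s - s') < ds) by rmin_solve.
    apply Hf in Pf. apply Hg in Pg.
    rewrite pdist_D in Pf, Pg |- *. unfold pD in *. rewrite !Hh_E by auto.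
    eapply Rle_lt_trans; [apply E_bound; auto; apply proj2_sig|].
    fold A B in Pf, Pg |- *.
    set (a := DD T' w A (proj1_sig (f y))) in *. set (b := DD T' w B (proj1_sig (g y))) in *.
    set (sg := Rabs (s - s')) in *.
    assert (Ha : 0 <= a) by apply DD_nonneg. assert (Hb : 0 <= b) by apply DD_nonneg.
    assert (Hsg : 0 <= sg) by apply Rabs_pos.
    assert (Hst : sg * (16 * K) <= eps).
    { unfold ds in Ps. apply Rlt_le in Ps. apply (Rmult_le_compat_r (16 * K)) in Ps; [|lra].
      unfold Rdiv in Ps. rewrite Rmult_assoc, Rinv_l in Ps by lra. lra. }
    assert (hx T' w A + hx T' w B + a + b <= K) by (unfold K; lra).
    assert (sg * (hx T' w A + hx T' w B + a + b) <= sg * K) by (apply Rmult_le_compat_l; lra).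
    lra.
  - intros M HM. destruct (big_nat M) as [n Hn].
    destruct (Heq n) as [L [HL1 [HL2 HL]]].
    exists (INR (S L) + 1). split; [pose proof (pos_INR (S L)); lra|].
    intros x s Hs Hx. rewrite pdist_root.
    destruct (Rlt_le_dec (hx T v (proj1_sig x)) (INR (S L))) as [Hlt|Hge]; [lra|]. exfalso.
    set (c := @exist _ (fun a => gdistR (tadj T) v a (S L)) (lab T v L (proj1_sig x))
                     (labC_proof T v L x Hge) : Cset T v L).
    assert (Hc : inSub T v (proj1_sig c) (proj1_sig x)) by (apply lab_inSub; auto; apply proj2_sig).
    destruct (bond_exists (eta T v) (mPhi m n) L c HL1) as [y1 B1].
    destruct (bond_exists (eta T v) (mPhi m' n) L c HL2) as [y2 B2].
    specialize (HL c y1 y2 B1 B2).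
    destruct Hm as [_ [_ Hm3]]. destruct Hm' as [_ [_ Hm3']].
    assert (I1 := Hm3 n y1 x (inSub_bond T v _ _ _ _ _ B1 Hc)).
    assert (I2 := Hm3' n y2 x (inSub_bond T v _ _ _ _ _ B2 Hc)).
    rewrite <- HL in I2.
    pose proof (inSub_mx T' w _ _ _ (proj2_sig (f x)) (proj2_sig (g x)) I1 I2).
    rewrite Cset_lvl in H.
    pose proof (E_height T' w (proj1_sig (f x)) (proj1_sig (g x)) s (proj2_sig (f x)) (proj2_sig (g x)) Hs).
    rewrite <- Hh_E in H0 by auto. rewrite pdist_root in Hx.
    assert (INR n <= INR (S n)) by (apply le_INR; lia). lra.
Qed.

End Faith.

End MF2.
Import MF2.

Module MG1.
Import ListNotations.
Open Scope nat_scope.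

Lemma chain_nth {V} (adj : V -> V -> Prop) x0 l d : chain adj x0 l ->
  forall i, i < length l -> adj (nth i (x0 :: l) d) (nth (S i) (x0 :: l) d).
Proof.
  revert x0; induction l as [|y l IH]; intros x0 H i Hi; simpl in *; [lia|].
  destruct H as [H1 H2]. destruct i as [|i]; simpl; auto.
  apply (IH y H2 i). lia.
Qed.

Lemma last_nth {V} (l : list V) x0 d : last l x0 = nth (length l) (x0 :: l) d.
Proof.
  revert x0; induction l as [|y l IH]; intros x0; simpl; auto.
  rewrite IH. destruct l; simpl; auto.
Qed.

Lemma nocycle_level {V} (adj : V -> V -> Prop) (Lv : V -> nat) (par : V -> V) :
  (forall a b, adj a b -> (Lv b = S (Lv a) /\ a = par b) \/ (Lv a = S (Lv b) /\ b = par a)) ->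
  ~ has_cycle adj.
Proof.
  intros Hadj [x0 [l [Hlen [Hnd [Hch Hlast]]]]].
  set (c := x0 :: l). set (N := length c).
  assert (HN : N = S (length l)) by reflexivity.
  set (E := fun i => nth i c x0).
  set (nxt := fun i => if Nat.eqb i (N - 1) then 0 else S i).
  assert (Hnx : forall i, i < N -> adj (E i) (E (nxt i))).
  { intros i Hi. unfold nxt. destruct (Nat.eqb_spec i (N - 1)) as [Ei|Ei].
    - unfold E, c. replace i with (length l) by lia. rewrite <- last_nth. exact Hlast.
    - unfold E, c. apply chain_nth; auto. unfold N, c in *; simpl in *; lia. }
  assert (Hmax : exists k, k < N /\ forall j, j < N -> Lv (E j) <= Lv (E k)).
  { clear - HN. assert (G : forall n, 0 < n -> n <= N -> exists k, k < n /\ forall j, j < n -> Lv (E j) <= Lv (E k)).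
    { induction n; intros H0 HnN; [lia|]. destruct n as [|n].
      - exists 0; split; [lia|]; intros j Hj; assert (j = 0) by lia; subst; lia.
      - destruct IHn as [k [Hk Hkm]]; [lia|lia|].
        destruct (le_lt_dec (Lv (E (S n))) (Lv (E k))) as [L|L].
        + exists k; split; [lia|]. intros j Hj. destruct (Nat.eq_dec j (S n)); [subst; lia|]. apply Hkm; lia.
        + exists (S n); split; [lia|]. intros j Hj. destruct (Nat.eq_dec j (S n)); [subst; lia|].
          specialize (Hkm j ltac:(lia)); lia. }
    apply G; lia. }
  destruct Hmax as [k [Hk Hkm]].
  set (pi := if Nat.eqb k 0 then N - 1 else k - 1).
  assert (Hpi : pi < N /\ nxt pi = k).
  { unfold pi. destruct (Nat.eqb_spec k 0) as [e|e].
    - unfold nxt. rewrite Nat.eqb_refl. lia.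
    - unfold nxt. destruct (Nat.eqb_spec (k - 1) (N - 1)); lia. }
  destruct Hpi as [Hpi1 Hpi2].
  assert (Hsi : nxt k < N) by (unfold nxt; destruct (Nat.eqb_spec k (N - 1)); lia).
  assert (P1 := Hnx pi Hpi1). rewrite Hpi2 in P1.
  assert (P2 := Hnx k Hk).
  assert (Q1 : E pi = par (E k)).
  { destruct (Hadj _ _ P1) as [[_ H]|[H _]]; auto. specialize (Hkm pi Hpi1). lia. }
  assert (Q2 : E (nxt k) = par (E k)).
  { destruct (Hadj _ _ P2) as [[H _]|[_ H]]; auto. specialize (Hkm (nxt k) Hsi). lia. }
  assert (Hne : pi <> nxt k).
  { unfold pi, nxt. destruct (Nat.eqb_spec k 0); destruct (Nat.eqb_spec k (N - 1)); lia. }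
  apply Hne. eapply (proj1 (NoDup_nth c x0)); eauto. unfold E in Q1, Q2. congruence.
Qed.

Section TowerTree.
Variable A : tower.

Definition GV : Type := option {n : nat & tX A n}.

Definition Ch (a b : GV) : Prop :=
  (a = None /\ exists x : tX A 0, b = Some (existT _ 0 x)) \/
  (exists n (x : tX A (S n)), a = Some (existT _ n (tp A n x)) /\ b = Some (existT _ (S n) x)).

Definition GA (a b : GV) : Prop := Ch a b \/ Ch b a.

Definition Lv (a : GV) : nat := match a with None => 0 | Some (existT _ n _) => S n end.

Definition gpar (a : GV) : GV :=
  match a with
  | None => None
  | Some (existT _ 0 _) => None
  | Some (existT _ (S n) x) => Some (existT _ n (tp A n x))
  end.

Lemma Ch_lv a b : Ch a b -> Lv b = S (Lv a) /\ a = gpar b.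
Proof.
  intros [[-> [x ->]]|[n [x [-> ->]]]]; simpl; auto.
Qed.

Lemma GA_sym a b : GA a b -> GA b a.
Proof. unfold GA; tauto. Qed.

Lemma GA_irr a : ~ GA a a.
Proof. intros [H|H]; apply Ch_lv in H as [H _]; lia. Qed.

Lemma GA_cases a b : GA a b -> (Lv b = S (Lv a) /\ a = gpar b) \/ (Lv a = S (Lv b) /\ b = gpar a).
Proof. intros [H|H]; apply Ch_lv in H; tauto. Qed.

Lemma walk_root n (x : tX A n) : walk GA None (Some (existT _ n x)) (S n).
Proof.
  revert x; induction n; intros x.
  - apply walkS with None; [constructor|]. left; left; eauto.
  - apply walkS with (Some (existT _ n (tp A n x))); auto. left; right; eauto.
Qed.

Lemma walk_rootv a : walk GA None a (Lv a).
Proof. destruct a as [[n x]|]; simpl; [apply walk_root|constructor]. Qed.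

Lemma walk_cons' a b c n : GA a b -> walk GA b c n -> walk GA a c (S n).
Proof.
  intros Hab H; induction H.
  - apply walkS with a; [constructor|exact Hab].
  - eapply walkS; eauto.
Qed.

Lemma walk_rev' a b n : walk GA a b n -> walk GA b a n.
Proof.
  intros H; induction H. - constructor.
  - eapply walk_cons'; eauto. apply GA_sym; auto.
Qed.

Lemma walk_app' a b c n m : walk GA a b n -> walk GA b c m -> walk GA a c (n + m).
Proof.
  intros H1 H2; induction H2. - rewrite Nat.add_0_r; auto.
  - rewrite Nat.add_succ_r. eapply walkS; eauto.
Qed.

Lemma walk_lv a b n : walk GA a b n -> Lv b <= Lv a + n.
Proof.
  intros H; induction H as [|b c n H IH Hbc]; [lia|]. destruct (GA_cases _ _ Hbc) as [[E _]|[E _]]; lia.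
Qed.

Definition TG : Tree := {|
  tV := GV; tadj := GA; tadj_sym := GA_sym; tadj_irr := GA_irr;
  tconn := fun a b => ex_intro _ _ (walk_app' _ _ _ _ _ (walk_rev' _ _ _ (walk_rootv a)) (walk_rootv b));
  tacyc := nocycle_level GA Lv gpar GA_cases |}.

End TowerTree.

End MG1.
Import MG1.

Module MG2.
Open Scope nat_scope.

Section Surj.
Variable A : tower.
Notation TT := (TG A).

Lemma gdistR_root (z : GV A) : gdistR (GA A) None z (Lv A z).
Proof.
  split; [apply walk_rootv|]. intros m W. apply walk_lv in W. simpl in W. lia.
Qed.

Lemma Fm_proof n (x : tX A n) : gdistR (tadj TT) None (Some (existT _ n x)) (S n).
Proof. apply (gdistR_root (Some (existT _ n x))). Qed.

Definition Fm : mor A (eta TT None) :=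
  @Build_mor A (eta TT None) (fun n => n)
    (fun n x => (exist (fun c => gdistR (tadj TT) None c (S n)) (Some (existT _ n x)) (Fm_proof n x) : tX (eta TT None) n)).

Lemma vtx_dec n (c : Cset TT None n) : exists x : tX A n, proj1_sig c = Some (existT _ n x).
Proof.
  destruct c as [z Hz]. simpl. pose proof (gdistR_root z).
  destruct Hz as [W1 M1]. destruct H as [W2 M2].
  specialize (M1 _ W2). specialize (M2 _ W1).
  destruct z as [[m x]|]; simpl in *; [|lia].
  assert (m = n) by lia. subst. exists x; auto.
Qed.

Definition Gm : mor (eta TT None) A :=
  @Build_mor (eta TT None) A (fun n => n)
    (fun n c => proj1_sig (constructive_indefinite_description _ (vtx_dec n c))).

Lemma G_spec n c : proj1_sig c = Some (existT _ n (mf Gm n c)).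
Proof. exact (proj2_sig (constructive_indefinite_description _ (vtx_dec n c))). Qed.

Lemma GF n x : mf Gm n (mf Fm n x) = x.
Proof.
  pose proof (G_spec n (mf Fm n x)). simpl in H. injection H as H.
  apply inj_pair2_eq_dec in H; [|exact Nat.eq_dec]. auto.
Qed.

Lemma FG n c : mf Fm n (mf Gm n c) = c.
Proof. apply Cset_eq. simpl. symmetry. apply G_spec. Qed.

Lemma lvlTT z : lvl TT None z = Lv A z.
Proof. apply gdist_eq. apply gdistR_root. Qed.

Lemma parent_F n x : parent TT None n (mf Fm (S n) x) = mf Fm n (tp A n x).
Proof.
  apply Cset_eq. rewrite parent_val. simpl. symmetry. apply (par_unique TT None).
  - left. right. exists n, x. auto.
  - rewrite !lvlTT. reflexivity.
Qed.

Lemma bond_F n m x y : bond A n m x y -> bond (eta TT None) n m (mf Fm m x) (mf Fm n y).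
Proof.
  intros H; induction H.
  - constructor.
  - constructor. change (tp (eta TT None) m (mf Fm (S m) x)) with (parent TT None m (mf Fm (S m) x)).
    rewrite parent_F. auto.
Qed.

Lemma part_surj : exists (T : Tree) (v : tV T), tower_iso A (eta T v).
Proof.
  exists TT, None, Fm, Gm. split; [|split; [|split]].
  - intros n n' Hn. exists n'. split; [simpl; lia|split; [simpl; lia|]].
    intros x y1 y2 z B1 B2 B3. simpl in B2. apply bond_refl_inv in B2. subst y2.
    apply bond_F in B1. eapply bond_fun; eauto.
  - intros n n' Hn. exists n'. split; [simpl; lia|split; [simpl; lia|]].
    intros c y1 y2 z B1 B2 B3. simpl in B2. apply bond_refl_inv in B2. subst y2.
    apply bond_F in B3. rewrite FG in B3. pose proof (bond_fun _ _ _ _ _ _ B1 B3). subst y1.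
    apply GF.
  - intros n. exists n. split; [simpl; lia|split; [simpl; lia|]].
    intros x y1 y2 B1 B2. simpl in *. apply bond_refl_inv in B1. apply bond_refl_inv in B2. subst.
    apply GF.
  - intros n. exists n. split; [simpl; lia|split; [simpl; lia|]].
    intros x y1 y2 B1 B2. simpl in *. apply bond_refl_inv in B1. apply bond_refl_inv in B2. subst.
    apply FG.
Qed.

End Surj.

End MG2.
Import MG2.

Module MH1.
Open Scope R_scope.

Section Via.
Variable T : Tree.

Definition isEnd (x : raw (tV T)) (p : tV T * R) : Prop := p = fst (ends x) \/ p = snd (ends x).

Lemma via_le_leg x y p q : isEnd x p -> isEnd y q -> via T x y <= leg T p q.
Proof.
  unfold via, isEnd. destruct (ends x) as [p1 p2]. destruct (ends y) as [q1 q2]. simpl.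
  intros [->| ->] [->| ->]; rmin_solve.
Qed.

Lemma via_glb x y z : (forall p q, isEnd x p -> isEnd y q -> z <= leg T p q) -> z <= via T x y.
Proof.
  unfold via, isEnd. destruct (ends x) as [p1 p2]. destruct (ends y) as [q1 q2]. simpl.
  intros H. pose proof (H p1 q1 (or_introl eq_refl) (or_introl eq_refl)).
  pose proof (H p1 q2 (or_introl eq_refl) (or_intror eq_refl)).
  pose proof (H p2 q1 (or_intror eq_refl) (or_introl eq_refl)).
  pose proof (H p2 q2 (or_intror eq_refl) (or_intror eq_refl)).
  repeat apply Rmin_glb; auto.
Qed.

Lemma rdist_le_via x y : rdist T x y <= via T x y.
Proof.
  unfold rdist. destruct x; destruct y; try apply Rle_refl.
  destruct excluded_middle_informative; [apply Rmin_r|apply Rle_refl].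
Qed.

Lemma rdist_glb x y z : (forall p q, isEnd x p -> isEnd y q -> z <= leg T p q) ->
  (forall a b t s, x = PE a b t -> y = PE a b s -> z <= Rabs (t - s)) -> z <= rdist T x y.
Proof.
  intros H1 H2. unfold rdist. destruct x as [a|a b t]; destruct y as [c|c d s]; try (apply via_glb; auto).
  destruct excluded_middle_informative as [[<- <-]|]; [|apply via_glb; auto].
  apply Rmin_glb; [eapply H2; eauto|apply via_glb; auto].
Qed.

End Via.

End MH1.
Import MH1.

Module MH2.
Open Scope nat_scope.

Lemma anc_common (T : Tree) (v : tV T) c c' a : anc T v c a -> anc T v c' a ->
  lvl T v c <= lvl T v c' -> anc T v c c'.
Proof.
  intros H1 H2 L. apply anc_iff in H1 as [L1 E1]. apply anc_iff in H2 as [L2 E2].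
  apply anc_iff. split; auto. rewrite E2 at 1. rewrite ancL_ancL by lia. auto.
Qed.

Section Full.
Variables (T : Tree) (v : tV T) (T' : Tree) (w : tV T').
Variable m : mor (eta T v) (eta T' w).
Hypothesis Hm : IsMor m.
Notation Phi := (mPhi m).

Definition Mc (n : nat) : nat :=
  proj1_sig (constructive_indefinite_description _ (Hm n (S n) (Nat.lt_succ_diag_r n))).

Lemma Mc_spec n : Phi n <= Mc n /\ Phi (S n) <= Mc n /\
  forall (x : tX (eta T v) (Mc n)) y1 y2 z,
    bond (eta T v) (Phi n) (Mc n) x y1 -> bond (eta T v) (Phi (S n)) (Mc n) x y2 ->
    bond (eta T' w) n (S n) (mf m (S n) y2) z -> mf m n y1 = z.
Proof. exact (proj2_sig (constructive_indefinite_description _ (Hm n (S n) (Nat.lt_succ_diag_r n)))). Qed.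

Fixpoint Psi (n : nat) : nat :=
  match n with
  | O => Phi O
  | S n' => Nat.max (S (Psi n')) (Nat.max (Mc n') (Phi (S n')))
  end.

Lemma Psi_Phi n : Phi n <= Psi n.
Proof. destruct n; cbn [Psi]; lia. Qed.
Lemma Psi_inc n : Psi n < Psi (S n).
Proof. cbn [Psi]; lia. Qed.
Lemma Psi_Mc n : Mc n <= Psi (S n).
Proof. cbn [Psi]; lia. Qed.
Lemma Psi_mono n n' : n <= n' -> Psi n <= Psi n'.
Proof. induction 1; auto. pose proof (Psi_inc m0); lia. Qed.
Lemma Psi_strict n n' : n < n' -> Psi n < Psi n'.
Proof. intros H. pose proof (Psi_inc n). pose proof (Psi_mono (S n) n' H). lia. Qed.
Lemma Psi_ge n : n <= Psi n.
Proof. induction n; [lia|]. pose proof (Psi_inc n); lia. Qed.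

Definition dn n (c : tX (eta T v) (Psi n)) : tX (eta T v) (Phi n) :=
  proj1_sig (constructive_indefinite_description _ (bond_exists (eta T v) (Phi n) (Psi n) c (Psi_Phi n))).

Lemma dn_spec n c : bond (eta T v) (Phi n) (Psi n) c (dn n c).
Proof. exact (proj2_sig (constructive_indefinite_description _ (bond_exists (eta T v) (Phi n) (Psi n) c (Psi_Phi n)))). Qed.

Definition gf n (c : tX (eta T v) (Psi n)) : tX (eta T' w) n := mf m n (dn n c).

Lemma comm n (c : tX (eta T v) (Psi (S n))) (c' : tX (eta T v) (Psi n)) :
  anc T v (proj1_sig c') (proj1_sig c) ->
  proj1_sig (gf n c') = par T' w (proj1_sig (gf (S n) c)).
Proof.
  intros Hcc. destruct (Mc_spec n) as [H1 [H2 H3]].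
  destruct (bond_exists (eta T v) (Mc n) (Psi (S n)) c (Psi_Mc n)) as [x Bx].
  destruct (bond_exists _ (Phi n) (Mc n) x H1) as [y1 B1].
  destruct (bond_exists _ (Phi (S n)) (Mc n) x H2) as [y2 B2].
  specialize (H3 x y1 y2 (parent T' w n (mf m (S n) y2)) B1 B2 (bond_one (eta T' w) n (mf m (S n) y2))).
  assert (E2 : dn (S n) c = y2).
  { eapply bond_fun; [apply dn_spec|]. eapply bond_trans; eauto. }
  assert (E1 : dn n c' = y1).
  { eapply bond_fun; [|eapply bond_trans; [exact B1|exact Bx]].
    eapply bond_trans; [apply dn_spec|]. apply anc_bond; auto. apply Nat.lt_le_incl, Psi_inc. }
  unfold gf. rewrite E1, E2, H3. apply parent_val.
Qed.

Definition idx (L : nat) : nat := srch (fun n => Psi n < L) L.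

Lemma idx_spec L : Psi 0 < L -> Psi (idx L) < L /\ L <= Psi (S (idx L)).
Proof.
  intros H0. assert (P : Psi (idx L) < L) by (apply (srch_P (fun n => Psi n < L)); auto).
  split; auto. destruct (le_lt_dec L (Psi (S (idx L)))) as [Hl|Hl]; auto. exfalso.
  pose proof (Psi_ge (S (idx L))).
  assert (S (idx L) <= idx L) by (apply (srch_max (fun n => Psi n < L)); lia). lia.
Qed.

Lemma idx_ge n L : Psi n < L -> n <= idx L.
Proof. intros H. pose proof (Psi_ge n). apply (srch_max (fun n => Psi n < L)); lia. Qed.

Lemma idx_unique n L : Psi n < L -> L <= Psi (S n) -> idx L = n.
Proof.
  intros H1 H2. assert (H0 : Psi 0 < L) by (pose proof (Psi_mono 0 n ltac:(lia)); lia).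
  destruct (idx_spec L H0) as [A1 A2]. pose proof (idx_ge n L H1).
  destruct (Nat.eq_dec (idx L) n); auto.
  assert (S n <= idx L) by lia. pose proof (Psi_mono (S n) (idx L) H3). lia.
Qed.

Lemma cat_pf k a (H : S k <= lvl T v a) : gdistR (tadj T) v (ancL T v (S k) a) (S k).
Proof. apply gdistR_of_lvl. apply lvl_ancL; auto. Qed.

Definition cat k a : option (Cset T v k) :=
  match le_dec (S k) (lvl T v a) with
  | left H => Some (exist (fun c => gdistR (tadj T) v c (S k)) (ancL T v (S k) a) (cat_pf k a H))
  | right _ => None
  end.

Lemma cat_ex k a : S k <= lvl T v a -> exists c : Cset T v k, proj1_sig c = ancL T v (S k) a.
Proof. intros H. exists (exist (fun c => gdistR (tadj T) v c (S k)) _ (cat_pf k a H)). reflexivity. Qed.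

Definition Fv (a : tV T) : tV T' :=
  if le_lt_dec (lvl T v a) (Psi 0) then w else
  match cat (Psi (idx (lvl T v a))) a with
  | Some c => proj1_sig (gf (idx (lvl T v a)) c)
  | None => w
  end.

Lemma Fv_low a : lvl T v a <= Psi 0 -> Fv a = w.
Proof. intros H. unfold Fv. destruct le_lt_dec; auto; lia. Qed.

Lemma Fv_spec a n (c : Cset T v (Psi n)) : Psi 0 < lvl T v a -> idx (lvl T v a) = n ->
  proj1_sig c = ancL T v (S (Psi n)) a -> Fv a = proj1_sig (gf n c).
Proof.
  intros H0 Hi Hc. unfold Fv. destruct le_lt_dec; [lia|]. subst n.
  unfold cat. destruct le_dec as [H|H].
  - f_equal. f_equal. apply Cset_eq. simpl. auto.
  - exfalso. destruct (idx_spec _ H0). lia.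
Qed.

Lemma Fv_lvl a : Psi 0 < lvl T v a -> lvl T' w (Fv a) = S (idx (lvl T v a)).
Proof.
  intros H0. destruct (idx_spec _ H0) as [A1 A2].
  destruct (cat_ex (Psi (idx (lvl T v a))) a) as [c Hc]; [lia|].
  rewrite (Fv_spec a _ c H0 eq_refl Hc). apply Cset_lvl.
Qed.

Lemma Fv_v : Fv v = w.
Proof. apply Fv_low. rewrite lvl_v. lia. Qed.

Lemma Fv_edge a b : 0 < lvl T v b -> a = par T v b ->
  Fv a = Fv b \/ (Fv a = par T' w (Fv b) /\ lvl T' w (Fv b) = S (lvl T' w (Fv a))).
Proof.
  intros Hb Ea. assert (La : lvl T v a = lvl T v b - 1) by (rewrite Ea; apply lvl_par).
  destruct (le_lt_dec (lvl T v b) (Psi 0)) as [L1|L1].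
  - left. rewrite !Fv_low; auto; lia.
  - destruct (le_lt_dec (lvl T v a) (Psi 0)) as [L2|L2].
    + right. rewrite (Fv_low a L2).
      assert (Ei : idx (lvl T v b) = 0) by (apply idx_unique; [lia|pose proof (Psi_inc 0); lia]).
      pose proof (Fv_lvl b L1) as Hl. rewrite Ei in Hl.
      split.
      * symmetry. apply lvl0. rewrite lvl_par. lia.
      * rewrite Hl, lvl_v. auto.
    + set (n := idx (lvl T v a)). destruct (idx_spec _ L2) as [A1 A2]. fold n in A1, A2.
      destruct (cat_ex (Psi n) a) as [ca Hca]; [lia|].
      assert (Fa : Fv a = proj1_sig (gf n ca)) by (apply Fv_spec; auto).
      destruct (le_lt_dec (lvl T v b) (Psi (S n))) as [L3|L3].
      * left. rewrite Fa. symmetry. apply Fv_spec; auto.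
        -- apply idx_unique; lia.
        -- rewrite Hca. rewrite Ea, par_ancL by lia. apply ancL_ancL; lia.
      * right. assert (Eb : idx (lvl T v b) = S n).
        { apply idx_unique; [lia|]. pose proof (Psi_inc (S n)). lia. }
        destruct (cat_ex (Psi (S n)) b) as [cb Hcb]; [lia|].
        assert (Fb : Fv b = proj1_sig (gf (S n) cb)) by (apply Fv_spec; auto).
        assert (Hb' : proj1_sig cb = b).
        { rewrite Hcb. replace (S (Psi (S n))) with (lvl T v b) by lia. apply ancL_self. }
        rewrite Fa, Fb. split.
        -- apply comm. rewrite Hb', Hca. eapply anc_trans; [apply anc_ancL; lia|]. rewrite Ea. apply anc_par.
        -- rewrite !Cset_lvl. auto.
Qed.

Lemma Fv_adj a b : tadj T a b -> Fv a = Fv b \/ tadj T' (Fv a) (Fv b).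
Proof.
  intros H. destruct (adj_cases T v a b H) as [[E1 E2]|[E1 E2]].
  - destruct (Fv_edge a b ltac:(lia) E2) as [E|[E L]]; [auto|right].
    rewrite E. apply tadj_sym. apply par_spec. lia.
  - destruct (Fv_edge b a ltac:(lia) E2) as [E|[E L]]; [auto|right].
    rewrite E. apply par_spec. lia.
Qed.

Lemma Fv_walk a c n : walk (tadj T) a c n -> exists n', n' <= n /\ walk (tadj T') (Fv a) (Fv c) n'.
Proof.
  intros W; induction W as [|b c n W IH Hbc].
  - exists 0; split; [lia|constructor].
  - destruct IH as [n' [Hn' W']]. destruct (Fv_adj b c Hbc) as [E|H].
    + rewrite <- E. exists n'; split; [lia|auto].
    + exists (S n'); split; [lia|]. eapply walkS; eauto.
Qed.

Lemma gdist_Fv a c : gdist T' (Fv a) (Fv c) <= gdist T a c.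
Proof.
  destruct (Fv_walk a c _ (gdist_walk T a c)) as [n' [Hn W]].
  pose proof (gdist_le T' _ _ _ W). lia.
Qed.

Lemma Fv_high n a : S (Psi n) <= lvl T v a -> S n <= lvl T' w (Fv a).
Proof.
  intros H. assert (H0 : Psi 0 < lvl T v a) by (pose proof (Psi_mono 0 n ltac:(lia)); lia).
  rewrite Fv_lvl by auto. pose proof (idx_ge n (lvl T v a) ltac:(lia)). lia.
Qed.

Lemma chainF d j (cj : Cset T v (Psi j)) (cn : Cset T v (Psi (d + j))) :
  anc T v (proj1_sig cj) (proj1_sig cn) ->
  anc T' w (proj1_sig (gf j cj)) (proj1_sig (gf (d + j) cn)).
Proof.
  revert cn. induction d as [|d IH]; intros cn H.
  - simpl in cn, H |- *. assert (cj = cn).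
    { apply Cset_eq. apply (anc_unique T v _ _ (proj1_sig cn)); auto. apply anc_refl.
      rewrite !Cset_lvl; auto. }
    subst; apply anc_refl.
  - assert (Hl : S (Psi (d + j)) <= lvl T v (proj1_sig cn)).
    { rewrite Cset_lvl. pose proof (Psi_inc (d + j)). change (S d + j) with (S (d + j)). lia. }
    set (cm := exist (fun c => gdistR (tadj T) v c (S (Psi (d + j)))) _ (cat_pf (Psi (d + j)) (proj1_sig cn) Hl) : Cset T v (Psi (d + j))).
    assert (Hm1 : anc T v (proj1_sig cm) (proj1_sig cn)) by (apply anc_ancL; auto).
    assert (Hm2 : anc T v (proj1_sig cj) (proj1_sig cm)).
    { apply (anc_common T v _ _ (proj1_sig cn)); auto. rewrite !Cset_lvl.
      pose proof (Psi_mono j (d + j) ltac:(lia)). lia. }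
    pose proof (comm (d + j) cn cm Hm1).
    eapply anc_trans; [apply IH; eauto|]. rewrite H0. apply anc_par.
Qed.

Lemma Fv_anc k (c : Cset T v (Psi k)) a : anc T v (proj1_sig c) a ->
  anc T' w (proj1_sig (gf k c)) (Fv a).
Proof.
  intros H. pose proof (anc_lvl T v _ _ H) as L. rewrite Cset_lvl in L.
  assert (H0 : Psi 0 < lvl T v a) by (pose proof (Psi_mono 0 k ltac:(lia)); lia).
  set (n := idx (lvl T v a)). pose proof (idx_ge k (lvl T v a) ltac:(lia)) as Hkn. fold n in Hkn.
  destruct (idx_spec _ H0) as [A1 A2]. fold n in A1, A2.
  destruct (cat_ex (Psi ((n - k) + k)) a) as [cn Hcn].
  { replace ((n - k) + k) with n by lia. lia. }
  rewrite (Fv_spec a _ cn H0) by (auto; lia).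
  apply chainF. apply (anc_common T v _ _ a); auto.
  - rewrite Hcn. apply anc_ancL. replace ((n - k) + k) with n by lia. lia.
  - rewrite !Cset_lvl. pose proof (Psi_mono k ((n - k) + k) ltac:(lia)). lia.
Qed.

End Full.

End MH2.
Import MH2.

Module MH3.
Open Scope R_scope.

Lemma INR_int_le (a b : nat) (t : R) : 0 <= t < 1 -> INR b <= INR a + t -> (b <= a)%nat.
Proof.
  intros Ht H. destruct (le_lt_dec b a) as [L|L]; auto. exfalso.
  apply le_INR in L. rewrite S_INR in L. lra.
Qed.

Section Full2.
Variables (T : Tree) (v : tV T) (T' : Tree) (w : tV T').
Variable m : mor (eta T v) (eta T' w).
Hypothesis Hm : IsMor m.
Notation F := (Fv T v T' w m Hm).
Notation Ps := (Psi T v T' w m Hm).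
Notation G := (gf T v T' w m Hm).

Definition fr (x : raw (tV T)) : raw (tV T') :=
  match x with
  | PV a => PV (F a)
  | PE a b t => if excluded_middle_informative (F a = F b) then PV (F a) else PE (F a) (F b) t
  end.

Lemma fr_valid x : valid T v x -> valid T' w (fr x).
Proof.
  intros Vx. destruct x as [a|a b t]; simpl; [exact I|].
  destruct excluded_middle_informative as [E|E]; [exact I|].
  apply valid_PE in Vx as [Hab [Eb [Ea Ht]]].
  destruct (Fv_edge T v T' w m Hm a b ltac:(lia) Ea) as [E'|[E' L]]; [contradiction|].
  split; [|split; [|auto]].
  - rewrite E'. apply tadj_sym. apply par_spec. lia.
  - exists (lvl T' w (F a)). split; [apply gdist_spec|]. rewrite <- L. apply gdist_spec.
Qed.

Definition fP (x : pt T v) : pt T' w := exist _ (fr (proj1_sig x)) (fr_valid _ (proj2_sig x)).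

Lemma fr_ends x p : valid T v x -> isEnd T x p ->
  exists p', isEnd T' (fr x) p' /\ fst p' = F (fst p) /\ 0 <= snd p' <= snd p.
Proof.
  intros Vx Hp. destruct x as [a|a b t]; unfold isEnd in *; simpl in *.
  - exists (F a, 0). destruct Hp as [->| ->]; simpl; (split; [left; reflexivity|split; [reflexivity|lra]]).
  - apply valid_PE in Vx as [_ [_ [_ Ht]]].
    destruct excluded_middle_informative as [E|E]; simpl.
    + exists (F a, 0). split; [left; reflexivity|]. destruct Hp as [->| ->]; simpl; (split; [auto|lra]).
    + destruct Hp as [->| ->].
      * exists (F a, t). simpl. split; [left; reflexivity|split; [reflexivity|lra]].
      * exists (F b, 1 - t). simpl. split; [right; reflexivity|split; [reflexivity|lra]].
Qed.

Lemma fr_lip x y : valid T v x -> valid T v y -> rdist T' (fr x) (fr y) <= rdist T x y.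
Proof.
  intros Vx Vy. apply rdist_glb.
  - intros p q Hp Hq.
    destruct (fr_ends x p Vx Hp) as [p' [Hp' [E1 [S1 S2]]]].
    destruct (fr_ends y q Vy Hq) as [q' [Hq' [E2 [S3 S4]]]].
    eapply Rle_trans; [apply rdist_le_via|]. eapply Rle_trans; [apply via_le_leg; eauto|].
    unfold leg. rewrite E1, E2. pose proof (le_INR _ _ (gdist_Fv T v T' w m Hm (fst p) (fst q))). lra.
  - intros a b t s -> ->. simpl. destruct excluded_middle_informative as [E|E].
    + unfold rdist, via, leg; simpl. rewrite gdist_refl. simpl. pose proof (Rabs_pos (t - s)). rmin_solve.
    + unfold rdist. destruct excluded_middle_informative as [_|C]; [apply Rmin_l|exfalso; apply C; auto].
Qed.

Lemma fr_high n x : valid T v x -> INR (S (Ps n)) <= hx T v x -> INR (S n) <= hx T' w (fr x).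
Proof.
  intros Vx H. rewrite S_INR in H |- *. destruct x as [a|a b t]; simpl in *.
  - assert (L : (S (Ps n) <= lvl T v a)%nat) by (apply INR_le; rewrite S_INR; lra).
    pose proof (le_INR _ _ (Fv_high T v T' w m Hm n a L)). rewrite S_INR in H0. lra.
  - apply valid_PE in Vx as [_ [_ [_ Ht]]].
    assert (L : (S (Ps n) <= lvl T v a)%nat) by (eapply INR_int_le; [|rewrite S_INR; eauto]; lra).
    pose proof (le_INR _ _ (Fv_high T v T' w m Hm n a L)). rewrite S_INR in H0.
    destruct excluded_middle_informative; simpl; lra.
Qed.

Lemma part_full_sec : exists f, RCP T v T' w f /\
  exists m', IsEtaMor T v T' w f m' /\ mor_eq m' m.
Proof.
  exists fP. split; [split; [|split]|].
  - intros x eps He. exists eps. split; auto. intros y Hy.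
    eapply Rle_lt_trans; [apply fr_lip; apply proj2_sig|exact Hy].
  - intros P [c0 [r0 Hc0]].
    destruct (big_nat (hx T' w (proj1_sig c0) + r0)) as [N0 HN0].
    exists (vpt T v v), (INR (S (Ps N0))). intros x Hx. apply Hc0 in Hx.
    rewrite pdist_root. rewrite pdist_D in Hx. unfold pD in Hx.
    pose proof (Rabs_bnd _ _ (DD_h T' w (proj1_sig c0) (proj1_sig (fP x)))).
    destruct (Rlt_le_dec (hx T v (proj1_sig x)) (INR (S (Ps N0)))) as [L|L]; auto. exfalso.
    apply fr_high in L; [|apply proj2_sig]. simpl in H, Hx. rewrite S_INR in L. lra.
  - simpl. rewrite Fv_v. reflexivity.
  - exists (@Build_mor (eta T v) (eta T' w) Ps G). split; [split; [|split]|].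
    + intros k. apply Psi_inc.
    + intros k x Hx. change (mPhi (Build_mor (eta T v) (eta T' w) Ps G) k) with (Ps k). rewrite pdist_root in *.
      destruct (Rlt_le_dec (hx T v (proj1_sig x)) (INR (S (Ps k)))) as [L|L]; [exact L|]. exfalso.
      apply fr_high in L; [|apply proj2_sig]. change (proj1_sig (fP x)) with (fr (proj1_sig x)) in Hx. lra.
    + intros k c x Hin. simpl. destruct (proj1_sig x) as [a|a b t]; simpl in *.
      * apply Fv_anc; auto.
      * destruct excluded_middle_informative; simpl; apply Fv_anc; auto.
    + intros n. exists (Ps n). split; [simpl; lia|split; [apply Psi_Phi|]].
      intros x y1 y2 B1 B2. simpl in *. apply bond_refl_inv in B1. subst y1.
      unfold gf. f_equal. eapply bond_fun; [apply dn_spec|exact B2].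
Qed.

End Full2.

End MH3.
Import MH3.

Open Scope R_scope.
Theorem theorem6p2 :
  (forall (T : Tree) (v : tV T) (T' : Tree) (w : tV T') (f : pt T v -> pt T' w),
      RCP T v T' w f -> exists m, IsEtaMor T v T' w f m /\ IsMor m) /\
  (forall (T : Tree) (v : tV T) (T' : Tree) (w : tV T') (f g : pt T v -> pt T' w) m m',
      RCP T v T' w f -> RCP T v T' w g -> rmp_homotopic T v T' w f g ->
      IsEtaMor T v T' w f m -> IsEtaMor T v T' w g m' -> mor_eq m m') /\
  (forall (T : Tree) (v : tV T) m,
      IsEtaMor T v T v (fun x => x) m -> mor_eq m (mor_id (eta T v))) /\
  (forall (T1 : Tree) (v1 : tV T1) (T2 : Tree) (v2 : tV T2) (T3 : Tree) (v3 : tV T3)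
          (f : pt T1 v1 -> pt T2 v2) (g : pt T2 v2 -> pt T3 v3) m1 m2 m3,
      RCP T1 v1 T2 v2 f -> RCP T2 v2 T3 v3 g ->
      IsEtaMor T1 v1 T2 v2 f m1 -> IsEtaMor T2 v2 T3 v3 g m2 ->
      IsEtaMor T1 v1 T3 v3 (fun x => g (f x)) m3 ->
      mor_eq m3 (mor_comp m1 m2)) /\
  (forall (T : Tree) (v : tV T) (T' : Tree) (w : tV T') (m : mor (eta T v) (eta T' w)),
      IsMor m -> exists f, RCP T v T' w f /\ exists m', IsEtaMor T v T' w f m' /\ mor_eq m' m) /\
  (forall (T : Tree) (v : tV T) (T' : Tree) (w : tV T') (f g : pt T v -> pt T' w) m m',
      RCP T v T' w f -> RCP T v T' w g ->
      IsEtaMor T v T' w f m -> IsEtaMor T v T' w g m' -> mor_eq m m' ->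
      rmp_homotopic T v T' w f g) /\
  (forall A : tower, exists (T : Tree) (v : tV T), tower_iso A (eta T v)).
Proof.
  split; [|split; [|split; [|split; [|split; [|split]]]]].
  - intros T v T' w f Hf. exact (part_exist T v T' w f Hf).
  - intros T v T' w f g m m' Hf Hg Hh H1 H2. exact (part_htpy T v T' w f g m m' Hh H1 H2).
  - intros T v m H. exact (part_id T v m H).
  - intros T1 v1 T2 v2 T3 v3 f g m1 m2 m3 Hf Hg H1 H2 H3.
    exact (part_comp T1 v1 T2 v2 T3 v3 f g m1 m2 m3 H1 H2 H3).
  - intros T v T' w m Hm. exact (part_full_sec T v T' w m Hm).
  - intros T v T' w f g m m' Hf Hg H1 H2 H3. exact (part_faith T v T' w f g m m' Hf Hg H1 H2 H3).
  - intros A. exact (part_surj A).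
Qed.
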